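(* Let $\theta_*(\rho)=\inf\{\theta\geq0:h_{\rho,1}(u(\theta))\leq0\}$ for $\rho>0$. (a) $\theta_*(\rho)=1$ for $\rho>\max_{x>0}\frac{k(1-e^{-x})^{k-1}}{x}$. For $\rho\leq\max_{x>0}\frac{k(1-e^{-x})^{k-1}}{x}$, $\theta_*(\rho)=1-(1-e^{-\lambda_\rho})^k$, where $\lambda_\rho$ is the maximum positive solution of $\rho=\frac{k(1-e^{-\lambda})^{k-1}}{\lambda}$; furthermore, for these $\rho$, $y_2(\theta_*(\rho),\rho)=\frac{k}{f_1(\lambda_\rho)}(1-\theta_*(\rho))$. (b) (I) $y_2(\theta_*(\rho_k),\rho_k)=1-\theta_*(\rho_k)>0$. (II) Writing $\theta_k=\theta_*(\rho_k)$ and $\vec y(\theta)=\vec y(\theta,\rho_k)$, we have $y_1'(\theta_k)<0$ and $y_2'(\theta_k)<0$. (III) There exists $\epsilon>0$ such that $\theta\mapsto\vec y(\theta,\rho_k)$ is twice continuously differentiable when considered on $[0,\theta_k]$ and on $[\theta_k,\theta_k+\epsilon]$ separately.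
   Context: Fix $k\geq3$. Let $f_1(\lambda)=\frac{\lambda(e^\lambda-1)}{e^\lambda-1-\lambda}$ for $\lambda>0$, let $\lambda_k$ be the unique positive solution of $f_1(\lambda)=k$, and $\rho_k=k(1-e^{-\lambda_k})^{k-1}/\lambda_k$. Let $u(\theta)=(1-\theta)^{1/k}$ and $h_{\rho,1}(u)=u-1+\exp(-ku^{k-1}/\rho)$. For $\theta\in[0,1)$ and $\vec x=(x_1,x_2)$ with $x_1\ge -k$, $x_2\ge0$, $\max(x_1,0)+2x_2\le k(1-\theta)$, let $\mathfrak p_0=\frac{\max(x_1,0)}{k(1-\theta)}$, $\mathfrak p_1=\frac{x_2\lambda^2}{k(1-\theta)(e^\lambda-1-\lambda)}$, $\mathfrak p_2=\frac{x_2\lambda}{k(1-\theta)}$, where for $x_2>0$, $\lambda$ is the unique positive solution of $f_1(\lambda)=\frac{k(1-\theta)-\max(x_1,0)}{x_2}$, and for $x_2=0$, $\mathfrak p_1=0$, $\mathfrak p_2=1-\mathfrak p_0$. Let $\vec F(\vec x,\theta)=(-1+(k-1)(\mathfrak p_1-\mathfrak p_0),-(k-1)\mathfrak p_1)$. For $\rho>0$, $\vec y(\theta,\rho)=(y_1,y_2)$ is the (unique) solution for $\theta\in[0,1)$ of $\frac{d\vec y}{d\theta}=\vec F(\vec y(\theta),\theta)$ with initial condition $\vec y(0,\rho)=(ke^{-k/\rho},\rho(1-e^{-k/\rho})-ke^{-k/\rho})$; derivatives $'$ are with respect to $\theta$. *)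

(* Defs.v *)
From Stdlib Require Import Reals Lra ClassicalEpsilon.
From Coquelicot Require Import Coquelicot.
Open Scope R_scope.

Definition f1 (l : R) : R := l * (exp l - 1) / (exp l - 1 - l).

Definition lambda_k (k : nat) : R :=
  epsilon (inhabits 0) (fun l => 0 < l /\ f1 l = INR k).

Definition gk (k : nat) (x : R) : R := INR k * (1 - exp (- x)) ^ (k - 1) / x.

Definition rho_k (k : nat) : R := gk k (lambda_k k).

(* max_{x>0} k (1-e^{-x})^{k-1}/x  (the supremum of the values; it is attained) *)
Definition rho_max (k : nat) : R :=
  real (Lub_Rbar (fun r => exists x, 0 < x /\ r = gk k x)).

Definition u (k : nat) (th : R) : R :=
  if Rle_dec (1 - th) 0 then 0 else Rpower (1 - th) (/ INR k).

Definition h1 (k : nat) (rho uu : R) : R :=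
  uu - 1 + exp (- (INR k * uu ^ (k - 1)) / rho).

(* theta_*(rho) = inf { theta >= 0 : h_{rho,1}(u(theta)) <= 0 }, theta restricted
   to [0,1] where u is defined *)
Definition theta_star (k : nat) (rho : R) : R :=
  real (Glb_Rbar (fun th => 0 <= th <= 1 /\ h1 k rho (u k th) <= 0)).

(* the unique positive solution lambda of f_1(lambda) = c (exists iff c > 2);
   for c <= 2 we take the continuous limit value lambda = 0 *)
Definition lam_of (c : R) : R :=
  if Rle_dec c 2 then 0
  else epsilon (inhabits 0) (fun l => 0 < l /\ f1 l = c).

Definition Gl (l : R) : R :=
  if Req_EM_T l 0 then 2 else l ^ 2 / (exp l - 1 - l).

Definition frak_p0 (k : nat) (x1 x2 th : R) : R :=
  Rmax x1 0 / (INR k * (1 - th)).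

Definition frak_p1 (k : nat) (x1 x2 th : R) : R :=
  if Rlt_dec 0 x2 then
    x2 * Gl (lam_of ((INR k * (1 - th) - Rmax x1 0) / x2)) / (INR k * (1 - th))
  else 0.

Definition frak_p2 (k : nat) (x1 x2 th : R) : R :=
  if Rlt_dec 0 x2 then
    x2 * lam_of ((INR k * (1 - th) - Rmax x1 0) / x2) / (INR k * (1 - th))
  else 1 - frak_p0 k x1 x2 th.

Definition F_dom (k : nat) (x1 x2 th : R) : Prop :=
  - INR k <= x1 /\ 0 <= x2 /\ Rmax x1 0 + 2 * x2 <= INR k * (1 - th).

Definition F1 (k : nat) (x1 x2 th : R) : R :=
  -1 + (INR k - 1) * (frak_p1 k x1 x2 th - frak_p0 k x1 x2 th).
Definition F2 (k : nat) (x1 x2 th : R) : R :=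
  - ((INR k - 1) * frak_p1 k x1 x2 th).

(* derivative of f at x relative to the set D (one-sided at endpoints) *)
Definition deriv_within (D : R -> Prop) (f : R -> R) (d x : R) : Prop :=
  forall eps, 0 < eps -> exists delta, 0 < delta /\
    forall t, D t -> Rabs (t - x) < delta ->
      Rabs (f t - f x - d * (t - x)) <= eps * Rabs (t - x).

Definition cont_within (D : R -> Prop) (f : R -> R) (x : R) : Prop :=
  forall eps, 0 < eps -> exists delta, 0 < delta /\
    forall t, D t -> Rabs (t - x) < delta -> Rabs (f t - f x) < eps.

Definition C2_on (a b : R) (f : R -> R) : Prop :=
  exists df ddf : R -> R, forall x, a <= x <= b ->
    deriv_within (fun t => a <= t <= b) f (df x) x /\
    deriv_within (fun t => a <= t <= b) df (ddf x) x /\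
    cont_within (fun t => a <= t <= b) ddf x.

Definition is_y_solution (k : nat) (y1 y2 : R -> R -> R) : Prop :=
  forall rho, 0 < rho ->
    y1 0 rho = INR k * exp (- (INR k / rho)) /\
    y2 0 rho = rho * (1 - exp (- (INR k / rho))) - INR k * exp (- (INR k / rho)) /\
    forall th, 0 <= th < 1 ->
      F_dom k (y1 th rho) (y2 th rho) th /\
      deriv_within (fun t => 0 <= t < 1) (fun t => y1 t rho)
        (F1 k (y1 th rho) (y2 th rho) th) th /\
      deriv_within (fun t => 0 <= t < 1) (fun t => y2 t rho)
        (F2 k (y1 th rho) (y2 th rho) th) th.

(* Main.v *)
Require Import Defs.
From Stdlib Require Import Reals Lra Psatz Classical ClassicalEpsilon.
From Coquelicot Require Import Coquelicot.
Open Scope R_scope.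

Lemma incr_MVT (f f' : R -> R) a b : a < b ->
  (forall c, a <= c <= b -> derivable_pt_lim f c (f' c)) ->
  (forall c, a < c < b -> 0 < f' c) -> f a < f b.
Proof.
  intros Hab Hd Hp. destruct (MVT_cor2 f f' a b Hab Hd) as [c [Hc Hc2]].
  specialize (Hp c Hc2). nra.
Qed.

Lemma incr_MVT_le (f f' : R -> R) a b : a <= b ->
  (forall c, a <= c <= b -> derivable_pt_lim f c (f' c)) ->
  (forall c, a < c < b -> 0 <= f' c) -> f a <= f b.
Proof.
  intros Hab Hd Hp. destruct (Req_dec a b) as [->|Hne]; [lra|].
  destruct (MVT_cor2 f f' a b ltac:(lra) Hd) as [c [Hc Hc2]].
  specialize (Hp c Hc2). nra.
Qed.

Ltac dpl := apply is_derive_Reals; auto_derive.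

Lemma exp_bound2 x : 0 < x -> 1 + x + x^2/2 < exp x.
Proof.
  intro Hx.
  assert (H := incr_MVT (fun t => exp t - 1 - t - t^2/2) (fun t => exp t - 1 - t) 0 x Hx).
  cbv beta in H. rewrite exp_0 in H.
  assert (0 < exp x - 1 - x - x^2/2); [|lra].
  assert (1 - 1 - 0 - 0^2/2 = 0) as E0 by field. rewrite E0 in H.
  apply H.
  - intros c _. dpl; [auto|]. field.
  - intros c Hc. pose proof (exp_ineq1 c ltac:(lra)). lra.
Qed.

Lemma exp_bound3 x : 0 < x -> 1 + x + x^2/2 + x^3/6 < exp x.
Proof.
  intro Hx.
  assert (H := incr_MVT (fun t => exp t - 1 - t - t^2/2 - t^3/6) (fun t => exp t - 1 - t - t^2/2) 0 x Hx).
  cbv beta in H. rewrite exp_0 in H.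
  assert (0 < exp x - 1 - x - x^2/2 - x^3/6); [|lra].
  assert (1 - 1 - 0 - 0^2/2 - 0^3/6 = 0) as E0 by field. rewrite E0 in H.
  apply H.
  - intros c _. dpl; [auto|]. field.
  - intros c Hc. pose proof (exp_bound2 c ltac:(lra)). lra.
Qed.

Lemma sinh_bound t : 0 < t -> 2 * t < exp t - exp (- t).
Proof.
  intro Ht.
  assert (H := incr_MVT (fun s => exp s - exp (- s) - 2 * s) (fun s => exp s + exp (- s) - 2) 0 t Ht).
  cbv beta in H. rewrite Ropp_0, exp_0 in H.
  assert (0 < exp t - exp (-t) - 2 * t); [|lra].
  assert (1 - 1 - 2 * 0 = 0) as E0 by field. rewrite E0 in H.
  apply H.
  - intros c _. dpl; [auto|]. ring.
  - intros c Hc. assert (E1 : exp c * exp (- c) = 1) by (rewrite <- exp_plus, Rplus_opp_r; apply exp_0).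
    pose proof (exp_pos c). pose proof (exp_pos (-c)).
    assert (exp c <> exp (-c)). { intro He. rewrite He in E1.
      assert (exp (-c) = 1) by nra. rewrite <- exp_0 in H2. apply exp_inv in H2. lra. }
    assert (0 < (exp c - exp (- c))^2) by (apply pow2_gt_0; lra). nra.
Qed.

Lemma Eml_pos l : 0 < l -> 0 < exp l - 1 - l.
Proof. intro. pose proof (exp_ineq1 l ltac:(lra)). lra. Qed.

Definition f1' (l : R) : R := ((exp l - 1)^2 - l^2 * exp l) / (exp l - 1 - l)^2.

Lemma f1'_pos l : 0 < l -> 0 < f1' l.
Proof.
  intro Hl. unfold f1'. pose proof (Eml_pos l Hl).
  apply Rdiv_lt_0_compat; [|apply pow2_gt_0; lra].
  pose proof (sinh_bound (l/2) ltac:(lra)).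
  assert (Ee : exp l = exp (l/2) * exp (l/2)) by (rewrite <- exp_plus; f_equal; field).
  assert (E1 : exp (l/2) * exp (- (l/2)) = 1) by (rewrite <- exp_plus, Rplus_opp_r; apply exp_0).
  pose proof (exp_pos (l/2)). pose proof (exp_pos (-(l/2))).
  (* exp l - 1 = e (e - 1/e) > e * l *)
  assert (exp l - 1 > exp (l/2) * l).
  { rewrite Ee. replace (exp (l/2) * exp (l/2) - 1) with (exp (l/2) * (exp (l/2) - exp (-(l/2)))) by nra.
    apply Rmult_lt_compat_l; lra. }
  assert (0 < exp (l/2) * l) by nra.
  assert ((exp l - 1)^2 > (exp (l/2) * l)^2) by (apply pow_lt_compat_l_Rabs||nra).
  rewrite Ee. nra.
Qed.

Lemma f1_deriv l : 0 < l -> derivable_pt_lim f1 l (f1' l).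
Proof.
  intro Hl. pose proof (Eml_pos l Hl). unfold f1, f1'.
  dpl. lra. field. lra.
Qed.

Lemma f1_gt_l l : 0 < l -> l < f1 l.
Proof.
  intro Hl. pose proof (Eml_pos l Hl). unfold f1.
  apply Rlt_div_r; [lra|]. nra.
Qed.

Lemma f1_gt2 l : 0 < l -> 2 < f1 l.
Proof.
  intro Hl. pose proof (Eml_pos l Hl). unfold f1.
  apply Rlt_div_r; [lra|].
  assert (HM := incr_MVT (fun t => (t - 2) * exp t + t + 2) (fun t => (t - 1) * exp t + 1) 0 l Hl).
  cbv beta in HM. rewrite exp_0 in HM. replace ((0 - 2) * 1 + 0 + 2) with 0 in HM by ring.
  assert (0 < (l - 2) * exp l + l + 2); [|nra].
  apply HM.
  - intros c _. dpl; [auto|]. ring.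
  - intros c Hc. pose proof (exp_ineq1 (- c) ltac:(lra)).
    assert (E1 : exp c * exp (- c) = 1) by (rewrite <- exp_plus, Rplus_opp_r; apply exp_0).
    pose proof (exp_pos c). nra.
Qed.

Lemma f1_lt l : 0 < l -> f1 l < 2 + l.
Proof.
  intro Hl. pose proof (Eml_pos l Hl). pose proof (exp_bound2 l Hl). unfold f1.
  apply Rlt_div_l; [lra|]. nra.
Qed.

Lemma f1_incr a b : 0 < a -> a < b -> f1 a < f1 b.
Proof.
  intros Ha Hab. apply (incr_MVT f1 f1'); auto.
  - intros c Hc. apply f1_deriv; lra.
  - intros c Hc. apply f1'_pos; lra.
Qed.

Lemma f1_inj a b : 0 < a -> 0 < b -> f1 a = f1 b -> a = b.
Proof.
  intros Ha Hb He. destruct (Rtotal_order a b) as [H|[H|H]]; auto.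
  - pose proof (f1_incr a b Ha H); lra.
  - pose proof (f1_incr b a Hb H); lra.
Qed.

Lemma f1_cont l : 0 < l -> continuity_pt f1 l.
Proof. intro. apply derivable_continuous_pt. exists (f1' l). apply f1_deriv; auto. Qed.

Lemma f1_surj c : 2 < c -> exists l, 0 < l /\ f1 l = c.
Proof.
  intro Hc.
  destruct (Ranalysis5.IVT_interv (fun t => f1 t - c) ((c-2)/2) c) as [z [Hz1 Hz2]].
  - intros a Ha. apply continuity_pt_minus; [apply f1_cont; lra| apply continuity_pt_const; intros ? ?; auto].
  - lra.
  - pose proof (f1_lt ((c-2)/2) ltac:(lra)). lra.
  - pose proof (f1_gt_l c ltac:(lra)). lra.
  - exists z. split; lra.
Qed.

Lemma lam_of_spec c : 2 < c -> 0 < lam_of c /\ f1 (lam_of c) = c.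
Proof.
  intro Hc. unfold lam_of. destruct (Rle_dec c 2); [lra|].
  apply epsilon_spec. destruct (f1_surj c Hc) as [l Hl]. exists l; auto.
Qed.

Lemma lam_of_f1 l : 0 < l -> lam_of (f1 l) = l.
Proof.
  intro Hl. pose proof (f1_gt2 l Hl). destruct (lam_of_spec (f1 l) H).
  apply f1_inj; auto.
Qed.

Lemma lam_of_cont c : 2 < c -> continuity_pt lam_of c.
Proof.
  intro Hc. set (d := (c - 2)/2).
  destruct (lam_of_spec (c - d) ltac:(unfold d; lra)) as [Ha1 Ha2].
  destruct (lam_of_spec (c + d) ltac:(unfold d; lra)) as [Hb1 Hb2].
  assert (Hab : lam_of (c - d) < lam_of (c + d)).
  { destruct (Rlt_le_dec (lam_of (c - d)) (lam_of (c + d))) as [H|H]; auto.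
    destruct (Req_dec (lam_of (c - d)) (lam_of (c + d))) as [E|E].
    - rewrite E in Ha2. unfold d in *; lra.
    - pose proof (f1_incr (lam_of (c + d)) (lam_of (c - d)) Hb1 ltac:(lra)). unfold d in *; lra. }
  apply (Ranalysis5.continuity_pt_recip_prelim f1 lam_of _ _ Hab).
  - intros x y Hx Hxy Hy. apply f1_incr; lra.
  - intros x Hx. unfold comp, id. apply lam_of_f1. lra.
  - intros a Ha. apply f1_cont. lra.
  - rewrite Ha2, Hb2. unfold d; lra.
Qed.

Lemma lam_of_deriv c : 2 < c -> derivable_pt_lim lam_of c (1 / f1' (lam_of c)).
Proof.
  intro Hc. set (d := (c - 2)/2).
  destruct (lam_of_spec (c - d) ltac:(unfold d; lra)) as [Ha1 Ha2].
  assert (Prf : forall a, lam_of (c - d) <= a <= lam_of (c + d) -> derivable_pt f1 a).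
  { intros a Ha. exists (f1' a). apply f1_deriv. lra. }
  destruct (lam_of_spec c Hc) as [Hl1 Hl2].
  destruct (lam_of_spec (c + d) ltac:(unfold d; lra)) as [Hb1 Hb2].
  assert (Hmono : forall x y, 2 < x -> x < y -> lam_of x < lam_of y).
  { intros x y Hx Hxy. destruct (lam_of_spec x Hx) as [X1 X2]. destruct (lam_of_spec y ltac:(lra)) as [Y1 Y2].
    destruct (Rlt_le_dec (lam_of x) (lam_of y)) as [H|H]; auto.
    destruct (Req_dec (lam_of x) (lam_of y)) as [E|E].
    - rewrite E in X2. lra.
    - pose proof (f1_incr (lam_of y) (lam_of x) ltac:(lra) ltac:(lra)). lra. }
  assert (Pg : lam_of (c - d) <= lam_of c <= lam_of (c + d)).
  { split; left; apply Hmono; unfold d; lra. }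
  pose proof (Ranalysis5.derivable_pt_lim_recip_interv f1 lam_of (c - d) (c + d) c Prf
     (lam_of_cont c Hc) ltac:(unfold d; lra) ltac:(unfold d; lra) Pg) as HR.
  assert (Hd : derive_pt f1 (lam_of c) (Prf (lam_of c) Pg) = f1' (lam_of c)).
  { apply derive_pt_eq_0. apply f1_deriv. auto. }
  rewrite Hd in HR. apply HR.
  - intros x Hx. unfold comp, id. apply lam_of_spec. unfold d in *; lra.
  - pose proof (f1'_pos _ Hl1). lra.
Qed.

Lemma dpl_form f y0 l : derivable_pt_lim f y0 l ->
  forall eps, 0 < eps -> exists delta, 0 < delta /\
    forall y, Rabs (y - y0) < delta -> Rabs (f y - f y0 - l * (y - y0)) <= eps * Rabs (y - y0).
Proof.
  intros H eps He. destruct (H eps He) as [[delta Hd] Hdl].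
  exists delta. split; auto. intros y Hy.
  destruct (Req_dec y y0) as [->|Hne].
  - replace (f y0 - f y0 - l * (y0 - y0)) with 0 by ring. rewrite Rabs_R0.
    apply Rmult_le_pos; [lra|apply Rabs_pos].
  - assert (Hh : y - y0 <> 0) by lra.
    specialize (Hdl (y - y0) Hh Hy). replace (y0 + (y - y0)) with y in Hdl by ring.
    replace (f y - f y0 - l * (y - y0)) with (((f y - f y0) / (y - y0) - l) * (y - y0)) by (field; auto).
    rewrite Rabs_mult. apply Rmult_le_compat_r; [apply Rabs_pos|lra].
Qed.

Lemma cpt_form f x : continuity_pt f x ->
  forall eps, 0 < eps -> exists delta, 0 < delta /\
    forall y, Rabs (y - x) < delta -> Rabs (f y - f x) < eps.
Proof.
  intros H eps He. destruct (H eps He) as [a [Ha Hy]].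
  exists a. split; auto. intros y Hyx.
  destruct (Req_dec y x) as [->|Hne].
  - replace (f x - f x) with 0 by ring. rewrite Rabs_R0. lra.
  - apply (Hy y). split; [split; [exact I|auto]|]. exact Hyx.
Qed.

Lemma dw_cont D f d x : deriv_within D f d x -> cont_within D f x.
Proof.
  intros H eps He. destruct (H 1 ltac:(lra)) as [d1 [Hd1 H1]].
  set (M := Rabs d + 1).
  assert (HM : 0 < M) by (unfold M; pose proof (Rabs_pos d); lra).
  exists (Rmin d1 (eps / M)). split.
  { apply Rmin_pos; auto. apply Rdiv_lt_0_compat; auto. }
  intros t Dt Ht. assert (Ht1 : Rabs (t - x) < d1) by (eapply Rlt_le_trans; [apply Ht|apply Rmin_l]).
  assert (Ht2 : Rabs (t - x) < eps / M) by (eapply Rlt_le_trans; [apply Ht|apply Rmin_r]).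
  specialize (H1 t Dt Ht1).
  assert (Rabs (f t - f x) <= M * Rabs (t - x)).
  { replace (f t - f x) with ((f t - f x - d * (t - x)) + d * (t - x)) by ring.
    eapply Rle_trans; [apply Rabs_triang|]. rewrite Rabs_mult. unfold M. lra. }
  apply Rlt_div_r in Ht2; auto. lra.
Qed.

Lemma dw_ext D f g d x : (forall t, D t -> f t = g t) -> D x ->
  deriv_within D f d x -> deriv_within D g d x.
Proof.
  intros He Dx H eps Heps. destruct (H eps Heps) as [de [Hde Hd]].
  exists de. split; auto. intros t Dt Ht. rewrite <- (He t Dt), <- (He x Dx). auto.
Qed.

Lemma dw_sub (D D' : R -> Prop) f d x : (forall t, D' t -> D t) ->
  deriv_within D f d x -> deriv_within D' f d x.
Proof.
  intros Hs H eps Heps. destruct (H eps Heps) as [de [Hde Hd]].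
  exists de. split; auto.
Qed.

Lemma cw_ext D f g x : (forall t, D t -> f t = g t) -> D x ->
  cont_within D f x -> cont_within D g x.
Proof.
  intros He Dx H eps Heps. destruct (H eps Heps) as [de [Hde Hd]].
  exists de. split; auto. intros t Dt Ht. rewrite <- (He t Dt), <- (He x Dx). auto.
Qed.

Lemma cw_sub (D D' : R -> Prop) f x : (forall t, D' t -> D t) ->
  cont_within D f x -> cont_within D' f x.
Proof.
  intros Hs H eps Heps. destruct (H eps Heps) as [de [Hde Hd]].
  exists de. split; auto.
Qed.

Lemma dw_of_dpl D f l x : derivable_pt_lim f x l -> deriv_within D f l x.
Proof.
  intros H eps He. destruct (dpl_form f x l H eps He) as [de [Hde Hd]].
  exists de. split; auto.
Qed.

Lemma dpl_of_dw (D : R -> Prop) f d x r : 0 < r -> (forall t, Rabs (t - x) < r -> D t) ->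
  deriv_within D f d x -> derivable_pt_lim f x d.
Proof.
  intros Hr HD H eps He. destruct (H (eps/2) ltac:(lra)) as [de [Hde Hd]].
  assert (Hp : 0 < Rmin de r) by (apply Rmin_pos; auto).
  exists (mkposreal _ Hp). intros h Hh Hhl. simpl in Hhl.
  assert (H1 : Rabs (x + h - x) < de).
  { replace (x + h - x) with h by ring. eapply Rlt_le_trans; [apply Hhl|apply Rmin_l]. }
  assert (H2 : Rabs (x + h - x) < r).
  { replace (x + h - x) with h by ring. eapply Rlt_le_trans; [apply Hhl|apply Rmin_r]. }
  specialize (Hd (x + h) (HD _ H2) H1). replace (x + h - x) with h in Hd by ring.
  replace ((f (x + h) - f x) / h - d) with ((f (x + h) - f x - d * h) / h) by (field; auto).
  unfold Rdiv. rewrite Rabs_mult, Rabs_inv.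
  assert (0 < Rabs h) by (apply Rabs_pos_lt; auto).
  apply Rmult_le_compat_r with (r := / Rabs h) in Hd; [|left; apply Rinv_0_lt_compat; auto].
  rewrite Rmult_assoc, Rinv_r in Hd; lra.
Qed.

Lemma cw_of_cpt D f x : continuity_pt f x -> cont_within D f x.
Proof.
  intros H eps He. destruct (cpt_form f x H eps He) as [de [Hde Hd]].
  exists de. split; auto.
Qed.

Lemma dw_plus D f g a b x : deriv_within D f a x -> deriv_within D g b x ->
  deriv_within D (fun t => f t + g t) (a + b) x.
Proof.
  intros Hf Hg eps He. destruct (Hf (eps/2) ltac:(lra)) as [d1 [Hd1 H1]].
  destruct (Hg (eps/2) ltac:(lra)) as [d2 [Hd2 H2]].
  exists (Rmin d1 d2). split; [apply Rmin_pos; auto|].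
  intros t Dt Ht.
  specialize (H1 t Dt (Rlt_le_trans _ _ _ Ht (Rmin_l _ _))).
  specialize (H2 t Dt (Rlt_le_trans _ _ _ Ht (Rmin_r _ _))).
  replace (f t + g t - (f x + g x) - (a + b) * (t - x)) with
    ((f t - f x - a * (t - x)) + (g t - g x - b * (t - x))) by ring.
  eapply Rle_trans; [apply Rabs_triang|]. lra.
Qed.

Lemma dw_scal D f a c x : deriv_within D f a x ->
  deriv_within D (fun t => c * f t) (c * a) x.
Proof.
  intros Hf eps He. set (M := Rabs c + 1).
  assert (HM : 0 < M) by (unfold M; pose proof (Rabs_pos c); lra).
  destruct (Hf (eps/M) ltac:(apply Rdiv_lt_0_compat; auto)) as [d1 [Hd1 H1]].
  exists d1. split; auto. intros t Dt Ht. specialize (H1 t Dt Ht).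
  replace (c * f t - c * f x - c * a * (t - x)) with (c * (f t - f x - a * (t - x))) by ring.
  rewrite Rabs_mult.
  apply Rle_trans with (M * (eps / M * Rabs (t - x))).
  - apply Rmult_le_compat; auto using Rabs_pos. unfold M; lra.
  - right. field. lra.
Qed.

Lemma dw_const D c x : deriv_within D (fun _ => c) 0 x.
Proof.
  intros eps He. exists 1. split; [lra|]. intros t _ _.
  replace (c - c - 0 * (t - x)) with 0 by ring. rewrite Rabs_R0.
  apply Rmult_le_pos; [lra|apply Rabs_pos].
Qed.

Lemma dw_id D x : deriv_within D (fun t => t) 1 x.
Proof.
  intros eps He. exists 1. split; [lra|]. intros t _ _.
  replace (t - x - 1 * (t - x)) with 0 by ring. rewrite Rabs_R0.
  apply Rmult_le_pos; [lra|apply Rabs_pos].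
Qed.

Lemma dw_comp D f g d l x : deriv_within D g d x -> derivable_pt_lim f (g x) l ->
  deriv_within D (fun t => f (g t)) (l * d) x.
Proof.
  intros Hg Hf eps He.
  destruct (Hg 1 ltac:(lra)) as [d1 [Hd1 H1]].
  set (M := Rabs d + 1).
  assert (HM : 0 < M) by (unfold M; pose proof (Rabs_pos d); lra).
  set (L := Rabs l + 1).
  assert (HL : 0 < L) by (unfold L; pose proof (Rabs_pos l); lra).
  destruct (dpl_form f (g x) l Hf (eps / (2 * M)) ltac:(apply Rdiv_lt_0_compat; lra)) as [df [Hdf Hf']].
  destruct (Hg (eps / (2 * L)) ltac:(apply Rdiv_lt_0_compat; lra)) as [d2 [Hd2 H2]].
  assert (Hp : 0 < Rmin (Rmin d1 d2) (df / M)).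
  { repeat apply Rmin_pos; auto. apply Rdiv_lt_0_compat; auto. }
  exists (Rmin (Rmin d1 d2) (df / M)). split; auto.
  intros t Dt Ht.
  assert (Ht1 : Rabs (t - x) < d1) by (eapply Rlt_le_trans; [apply Ht|]; eapply Rle_trans; [apply Rmin_l|apply Rmin_l]).
  assert (Ht2 : Rabs (t - x) < d2) by (eapply Rlt_le_trans; [apply Ht|]; eapply Rle_trans; [apply Rmin_l|apply Rmin_r]).
  assert (Ht3 : Rabs (t - x) < df / M) by (eapply Rlt_le_trans; [apply Ht|apply Rmin_r]).
  specialize (H1 t Dt Ht1). specialize (H2 t Dt Ht2).
  assert (Hgb : Rabs (g t - g x) <= M * Rabs (t - x)).
  { replace (g t - g x) with ((g t - g x - d * (t - x)) + d * (t - x)) by ring.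
    eapply Rle_trans; [apply Rabs_triang|]. rewrite Rabs_mult. unfold M. lra. }
  assert (Hgd : Rabs (g t - g x) < df).
  { apply Rlt_div_r in Ht3; auto. lra. }
  specialize (Hf' (g t) Hgd).
  replace (f (g t) - f (g x) - l * d * (t - x)) with
    ((f (g t) - f (g x) - l * (g t - g x)) + l * (g t - g x - d * (t - x))) by ring.
  eapply Rle_trans; [apply Rabs_triang|]. rewrite Rabs_mult.
  assert (A1 : eps / (2 * M) * Rabs (g t - g x) <= eps / 2 * Rabs (t - x)).
  { apply Rle_trans with (eps / (2 * M) * (M * Rabs (t - x))).
    - apply Rmult_le_compat_l; auto. left; apply Rdiv_lt_0_compat; lra.
    - right. field. lra. }
  assert (A2 : Rabs l * Rabs (g t - g x - d * (t - x)) <= eps / 2 * Rabs (t - x)).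
  { apply Rle_trans with (L * (eps / (2 * L) * Rabs (t - x))).
    - apply Rmult_le_compat; auto using Rabs_pos. unfold L; lra.
    - right. field. lra. }
  lra.
Qed.

Lemma dw_val D f d d' x : d = d' -> deriv_within D f d x -> deriv_within D f d' x.
Proof. intros ->; auto. Qed.

Lemma dw_ext_eq D f g d x : (forall t, f t = g t) ->
  deriv_within D f d x -> deriv_within D g d x.
Proof.
  intros He H eps Heps. destruct (H eps Heps) as [de [Hde Hd]].
  exists de. split; auto. intros t Dt Ht. rewrite <- !He. auto.
Qed.

Lemma cw_ext_eq D f g x : (forall t, f t = g t) ->
  cont_within D f x -> cont_within D g x.
Proof.
  intros He H eps Heps. destruct (H eps Heps) as [de [Hde Hd]].
  exists de. split; auto. intros t Dt Ht. rewrite <- !He. auto.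
Qed.

Lemma Sq_d y : derivable_pt_lim (fun z => z * z) y (2 * y).
Proof. apply is_derive_Reals; auto_derive; [auto|ring]. Qed.

Lemma dw_mult D f g a b x : deriv_within D f a x -> deriv_within D g b x ->
  deriv_within D (fun t => f t * g t) (a * g x + f x * b) x.
Proof.
  intros Hf Hg.
  assert (Hs : deriv_within D (fun t => f t + g t) (a + b) x) by (apply dw_plus; auto).
  assert (Hm : deriv_within D (fun t => f t + (-1) * g t) (a + (-1) * b) x) by (apply dw_plus; auto; apply dw_scal; auto).
  pose proof (dw_comp D (fun z => z * z) _ _ _ x Hs (Sq_d _)) as H1.
  pose proof (dw_comp D (fun z => z * z) _ _ _ x Hm (Sq_d _)) as H2.
  pose proof (dw_plus D _ _ _ _ x (dw_scal D _ _ (/4) x H1) (dw_scal D _ _ (-/4) x H2)) as H3.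
  cbv beta in H3.
  eapply dw_val; [|eapply dw_ext_eq; [|apply H3]].
  all: try intros t; cbv beta; field.
Qed.

Lemma Inv_d y : y <> 0 -> derivable_pt_lim (fun z => / z) y (- / (y * y)).
Proof. intro. apply is_derive_Reals; auto_derive; [auto|field; auto]. Qed.

Lemma dw_inv D g b x : g x <> 0 -> deriv_within D g b x ->
  deriv_within D (fun t => / g t) (- b / (g x * g x)) x.
Proof.
  intros Hn Hg. eapply dw_val; [|apply (dw_comp D (fun z => / z) g b _ x Hg (Inv_d _ Hn))].
  field. auto.
Qed.

Lemma cw_plus D f g x : cont_within D f x -> cont_within D g x ->
  cont_within D (fun t => f t + g t) x.
Proof.
  intros Hf Hg eps He. destruct (Hf (eps/2) ltac:(lra)) as [d1 [Hd1 H1]].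
  destruct (Hg (eps/2) ltac:(lra)) as [d2 [Hd2 H2]].
  exists (Rmin d1 d2). split; [apply Rmin_pos; auto|].
  intros t Dt Ht.
  specialize (H1 t Dt (Rlt_le_trans _ _ _ Ht (Rmin_l _ _))).
  specialize (H2 t Dt (Rlt_le_trans _ _ _ Ht (Rmin_r _ _))).
  replace (f t + g t - (f x + g x)) with ((f t - f x) + (g t - g x)) by ring.
  eapply Rle_lt_trans; [apply Rabs_triang|]. lra.
Qed.

Lemma cw_comp D f g x : cont_within D g x -> continuity_pt f (g x) ->
  cont_within D (fun t => f (g t)) x.
Proof.
  intros Hg Hf eps He. destruct (cpt_form f (g x) Hf eps He) as [d1 [Hd1 H1]].
  destruct (Hg d1 Hd1) as [d2 [Hd2 H2]].
  exists d2. split; auto.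
Qed.

Lemma cw_const D c x : cont_within D (fun _ => c) x.
Proof. apply cw_of_cpt. apply continuity_pt_const. intros ? ?; auto. Qed.

Lemma cw_id D x : cont_within D (fun t => t) x.
Proof. apply cw_of_cpt. apply derivable_continuous_pt, derivable_pt_id. Qed.

Lemma cw_scal D f c x : cont_within D f x -> cont_within D (fun t => c * f t) x.
Proof.
  intro H. apply (cw_comp D (fun z => c * z) f x H).
  apply derivable_continuous_pt. exists c. apply is_derive_Reals; auto_derive; [auto|ring].
Qed.

Lemma cw_mult D f g x : cont_within D f x -> cont_within D g x ->
  cont_within D (fun t => f t * g t) x.
Proof.
  intros Hf Hg.
  assert (Hs : cont_within D (fun t => f t + g t) x) by (apply cw_plus; auto).
  assert (Hm : cont_within D (fun t => f t + (-1) * g t) x) by (apply cw_plus; auto; apply cw_scal; auto).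
  assert (Sq : forall y, continuity_pt (fun z => z * z) y).
  { intro y. apply derivable_continuous_pt. exists (2 * y). apply Sq_d. }
  pose proof (cw_comp D _ _ x Hs (Sq _)) as H1.
  pose proof (cw_comp D _ _ x Hm (Sq _)) as H2.
  pose proof (cw_plus D _ _ x (cw_scal D _ (/4) x H1) (cw_scal D _ (-/4) x H2)) as H3.
  eapply cw_ext_eq; [|apply H3]. intro t. cbv beta. field.
Qed.

Lemma cw_inv D g x : g x <> 0 -> cont_within D g x -> cont_within D (fun t => / g t) x.
Proof.
  intros Hn Hg. apply (cw_comp D (fun z => / z) g x Hg).
  apply derivable_continuous_pt. eexists. apply Inv_d. auto.
Qed.

Lemma pow_le1 v n : 0 <= v <= 1 -> v ^ n <= 1.
Proof.
  intro Hv. induction n; simpl; [lra|].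
  pose proof (pow_le v n ltac:(lra)). nra.
Qed.

Lemma pow_le_self v n : 0 <= v <= 1 -> (1 <= n)%nat -> v ^ n <= v.
Proof.
  intros Hv Hn. destruct n; [lia|]. simpl.
  pose proof (pow_le1 v n Hv). pose proof (pow_le v n ltac:(lra)). nra.
Qed.

Lemma one_m_exp_bounds x : 0 < x -> 0 < 1 - exp (- x) < 1 /\ 1 - exp (- x) <= x.
Proof.
  intro Hx. pose proof (exp_pos (-x)). pose proof (exp_ineq1_le (-x)).
  assert (exp (- x) < 1) by (rewrite <- exp_0; apply exp_increasing; lra).
  lra.
Qed.

Lemma gk_pos k x : (1 <= k)%nat -> 0 < x -> 0 < gk k x.
Proof.
  intros Hk Hx. unfold gk. destruct (one_m_exp_bounds x Hx) as [[H1 H2] _].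
  apply Rdiv_lt_0_compat; auto. apply Rmult_lt_0_compat.
  - apply lt_0_INR. lia.
  - apply pow_lt. auto.
Qed.

Lemma gk_le_kx k x : 0 < x -> gk k x <= INR k / x.
Proof.
  intros Hx. unfold gk. destruct (one_m_exp_bounds x Hx) as [[H1 H2] _].
  pose proof (pow_le1 (1 - exp (-x)) (k-1) ltac:(lra)).
  pose proof (pos_INR k).
  unfold Rdiv. apply Rmult_le_compat_r; [left; apply Rinv_0_lt_compat; auto|]. nra.
Qed.

Lemma gk_le_k k x : (2 <= k)%nat -> 0 < x -> gk k x <= INR k.
Proof.
  intros Hk Hx. unfold gk. destruct (one_m_exp_bounds x Hx) as [[H1 H2] H3].
  pose proof (pow_le_self (1 - exp (-x)) (k-1) ltac:(lra) ltac:(lia)).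
  pose proof (pos_INR k).
  apply Rle_div_l; auto. nra.
Qed.

Lemma gk_small k x : (3 <= k)%nat -> 0 < x <= 1 -> gk k x <= INR k * x.
Proof.
  intros Hk Hx. unfold gk. destruct (one_m_exp_bounds x ltac:(lra)) as [[H1 H2] H3].
  replace (k - 1)%nat with (S (S (k - 3))) by lia.
  pose proof (pow_le1 (1 - exp (-x)) (k-3) ltac:(lra)).
  pose proof (pow_le (1 - exp (-x)) (k-3) ltac:(lra)).
  pose proof (pos_INR k). simpl.
  apply Rle_div_l; [lra|].
  assert ((1 - exp (- x)) * ((1 - exp (- x)) * (1 - exp (- x)) ^ (k - 3)) <= x * x).
  { set (v := 1 - exp (- x)) in *. set (w := v ^ (k - 3)) in *.
    apply Rle_trans with (v * v); [|apply Rmult_le_compat; lra].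
    apply Rmult_le_compat_l; [lra|]. nra. }
  nra.
Qed.

Lemma gk_cont k x : 0 < x -> continuity_pt (gk k) x.
Proof.
  intro Hx. apply derivable_continuous_pt. unfold gk.
  eexists. apply is_derive_Reals. auto_derive; [lra|reflexivity].
Qed.

Definition gset (k : nat) := fun r => exists x, 0 < x /\ r = gk k x.

Lemma rho_max_spec k : (3 <= k)%nat ->
  (forall x, 0 < x -> gk k x <= rho_max k) /\ exists xm, 0 < xm /\ gk k xm = rho_max k.
Proof.
  intro Hk. set (g0 := gk k 1). assert (Hg0 : 0 < g0) by (apply gk_pos; [lia|lra]).
  assert (HK : 3 <= INR k) by (replace 3 with (INR 3) by (simpl; ring); apply le_INR; lia).
  set (a := Rmin 1 (g0 / (2 * INR k))). set (b := Rmax 1 (2 * INR k / g0)).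
  assert (Ha : 0 < a <= 1).
  { unfold a. split; [apply Rmin_pos; [lra|apply Rdiv_lt_0_compat; lra]|apply Rmin_l]. }
  assert (Hb : 1 <= b) by apply Rmax_l.
  destruct (continuity_ab_maj (gk k) a b ltac:(lra)) as [Mx [HMx1 HMx2]].
  { intros c Hc. apply gk_cont. lra. }
  assert (HM1 : g0 <= gk k Mx) by (apply HMx1; lra).
  assert (Hall : forall x, 0 < x -> gk k x <= gk k Mx).
  { intros x Hx. destruct (Rlt_le_dec x a) as [Hxa|Hxa].
    - pose proof (gk_small k x Hk ltac:(lra)).
      assert (a <= g0 / (2 * INR k)) by apply Rmin_r.
      assert (INR k * x <= g0 / 2).
      { apply Rle_trans with (INR k * (g0 / (2 * INR k))); [nra|right; field; lra]. }
      lra.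
    - destruct (Rle_lt_dec x b) as [Hxb|Hxb]; [apply HMx1; lra|].
      pose proof (gk_le_kx k x Hx) as Hgx.
      assert (Hbm : 2 * INR k / g0 <= b) by apply Rmax_r.
      assert (Hxg : 2 * INR k < x * g0).
      { assert (2 * INR k / g0 < x) by lra. apply Rlt_div_l in H; lra. }
      assert (INR k / x <= g0 / 2).
      { apply Rle_div_l; [lra|]. nra. }
      lra. }
  assert (Hrm : rho_max k = gk k Mx).
  { unfold rho_max. rewrite (is_lub_Rbar_unique _ (Finite (gk k Mx))); [reflexivity|].
    split.
    - intros r [x [Hx ->]]. simpl. apply Hall; auto.
    - intros bb Hbb. apply Hbb. exists Mx. split; [lra|reflexivity]. }
  split.
  - intros x Hx. rewrite Hrm. apply Hall; auto.
  - exists Mx. split; [lra|auto].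
Qed.

Lemma max_sol k rho : (3 <= k)%nat -> 0 < rho -> rho <= rho_max k ->
  exists L, 0 < L /\ gk k L = rho /\ (forall mu, 0 < mu -> rho <= gk k mu -> mu <= L).
Proof.
  intros Hk Hr Hrm. destruct (rho_max_spec k Hk) as [Hub [xm [Hxm Hxm2]]].
  set (S := fun x => 0 < x /\ rho <= gk k x).
  assert (Hb : bound S).
  { exists (INR k / rho). intros x [Hx Hgx]. pose proof (gk_le_kx k x Hx).
    assert (Hkx : rho <= INR k / x) by lra.
    apply Rle_div_r in Hkx; auto.
    apply Rle_div_r; auto. lra. }
  destruct (completeness S Hb) as [L [HL1 HL2]].
  { exists xm. split; auto. lra. }
  assert (HxmL : xm <= L) by (apply HL1; split; auto; lra).
  assert (HLp : 0 < L) by lra.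
  assert (Hge : rho <= gk k L).
  { destruct (Rle_lt_dec rho (gk k L)) as [H|H]; auto. exfalso.
    destruct (cpt_form _ _ (gk_cont k L HLp) (rho - gk k L) ltac:(lra)) as [d [Hd Hd2]].
    assert (~ (forall x, S x -> x <= L - d)).
    { intro Hc. assert (L <= L - d) by (apply HL2; intros x Hx; apply Hc; auto). lra. }
    apply not_all_ex_not in H0. destruct H0 as [x Hx].
    apply imply_to_and in Hx. destruct Hx as [Sx Hx].
    assert (x <= L) by (apply HL1; auto).
    assert (Rabs (x - L) < d) by (rewrite Rabs_left1; lra).
    specialize (Hd2 x H1). destruct Sx as [_ Sx].
    rewrite Rabs_lt_between in Hd2. lra. }
  assert (Hle : gk k L <= rho).
  { destruct (Rle_lt_dec (gk k L) rho) as [H|H]; auto. exfalso.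
    destruct (cpt_form _ _ (gk_cont k L HLp) (gk k L - rho) ltac:(lra)) as [d [Hd Hd2]].
    assert (Rabs (L + d/2 - L) < d) by (rewrite Rabs_right; lra).
    specialize (Hd2 _ H0). rewrite Rabs_lt_between in Hd2.
    assert (L + d/2 <= L) by (apply HL1; split; lra). lra. }
  exists L. split; [auto|split; [lra|]].
  intros mu Hmu Hg. apply HL1. split; auto.
Qed.

Lemma u_eq k th : th < 1 -> u k th = Rpower (1 - th) (/ INR k).
Proof. intro H. unfold u. destruct (Rle_dec (1 - th) 0); [lra|auto]. Qed.

Lemma u_pos k th : th < 1 -> 0 < u k th.
Proof. intro H. rewrite u_eq; auto. unfold Rpower. apply exp_pos. Qed.

Lemma INR_k_pos k : (3 <= k)%nat -> 3 <= INR k.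
Proof. intro. replace 3 with (INR 3) by (simpl; ring). apply le_INR; lia. Qed.

Lemma u_pow k th : (3 <= k)%nat -> th < 1 -> (u k th) ^ k = 1 - th.
Proof.
  intros Hk H. rewrite u_eq; auto. pose proof (INR_k_pos k Hk).
  rewrite <- Rpower_pow; [|unfold Rpower; apply exp_pos].
  rewrite Rpower_mult. rewrite Rinv_l; [|lra]. apply Rpower_1. lra.
Qed.

Lemma u_lt1 k th : (3 <= k)%nat -> 0 < th < 1 -> u k th < 1.
Proof.
  intros Hk H. rewrite u_eq; [|lra]. pose proof (INR_k_pos k Hk).
  replace 1 with (Rpower 1 (/ INR k)) at 2.
  - apply Rlt_Rpower_l; [apply Rinv_0_lt_compat; lra|lra].
  - unfold Rpower. rewrite ln_1, Rmult_0_r. apply exp_0.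
Qed.

Lemma u_0 k : u k 0 = 1.
Proof. rewrite u_eq; [|lra]. unfold Rpower. rewrite Rminus_0_r, ln_1, Rmult_0_r. apply exp_0. Qed.

Lemma u_of_pow k w : (3 <= k)%nat -> 0 < w -> u k (1 - w ^ k) = w.
Proof.
  intros Hk Hw. pose proof (INR_k_pos k Hk). pose proof (pow_lt w k Hw).
  rewrite u_eq; [|lra]. replace (1 - (1 - w ^ k)) with (w ^ k) by ring.
  rewrite <- Rpower_pow; auto. rewrite Rpower_mult, Rinv_r; [|lra]. apply Rpower_1; auto.
Qed.

Lemma h1_1 k rho : 0 < rho -> 0 < h1 k rho 1.
Proof. intro. unfold h1. rewrite pow1. pose proof (exp_pos (- (INR k * 1) / rho)). lra. Qed.

Lemma h1_crit k rho v : 0 < rho -> 0 < v < 1 ->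
  0 < - ln (1 - v) /\ 1 - exp (- (- ln (1 - v))) = v /\
  (h1 k rho v <= 0 <-> rho <= gk k (- ln (1 - v))).
Proof.
  intros Hr Hv. set (x := - ln (1 - v)).
  assert (Hx : 0 < x) by (unfold x; assert (ln (1 - v) < 0) by (rewrite <- ln_1; apply ln_increasing; lra); lra).
  assert (He : exp (- x) = 1 - v) by (unfold x; rewrite Ropp_involutive; apply exp_ln; lra).
  split; auto. split; [lra|].
  unfold h1, gk. rewrite He. replace (1 - (1 - v)) with v by ring.
  pose proof (pow_lt v (k-1) ltac:(lra)) as Hvp. pose proof (pos_INR k) as Hkp.
  split.
  - intro Hh. assert (Q1 : exp (- (INR k * v ^ (k - 1)) / rho) <= exp (- x)) by lra.
    assert (Q2 : - (INR k * v ^ (k - 1)) / rho <= - x).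
    { destruct (Rle_lt_dec (- (INR k * v ^ (k - 1)) / rho) (- x)) as [h|h]; auto.
      apply exp_increasing in h. lra. }
    apply Rle_div_r; auto.
    assert (Q3 : x <= INR k * v ^ (k - 1) / rho).
    { unfold Rdiv in *. rewrite Ropp_mult_distr_l_reverse in Q2. lra. }
    apply Rle_div_r in Q3; auto. lra.
  - intro Hh. assert (Q1 : x * rho <= INR k * v ^ (k - 1)).
    { apply Rle_div_r in Hh; auto. lra. }
    assert (Q2 : - (INR k * v ^ (k - 1)) / rho <= - x).
    { unfold Rdiv. rewrite Ropp_mult_distr_l_reverse. apply Ropp_le_contravar.
      apply Rle_div_r; auto. }
    destruct Q2 as [h|h]; [apply exp_increasing in h|rewrite h]; lra.
Qed.

Lemma glb_at (A : R -> Prop) t0 : A t0 -> (forall t, A t -> t0 <= t) -> real (Glb_Rbar A) = t0.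
Proof.
  intros H1 H2. rewrite (is_glb_Rbar_unique A (Finite t0)); [reflexivity|].
  split.
  - intros x Hx. simpl. auto.
  - intros b Hb. apply Hb. auto.
Qed.

Lemma theta_star_val k rho L : (3 <= k)%nat -> 0 < rho -> 0 < L -> gk k L = rho ->
  (forall mu, 0 < mu -> rho <= gk k mu -> mu <= L) ->
  theta_star k rho = 1 - (1 - exp (- L)) ^ k /\
  (forall th, 0 <= th < 1 - (1 - exp (- L)) ^ k -> 0 < h1 k rho (u k th)).
Proof.
  intros Hk Hr HL HgL Hmax.
  set (w := 1 - exp (- L)).
  destruct (one_m_exp_bounds L HL) as [[Hw1 Hw2] _]. fold w in Hw1, Hw2.
  assert (Hwk : 0 < w ^ k < 1).
  { split; [apply pow_lt; auto|]. 
    destruct k; [lia|]. simpl. pose proof (pow_le1 w k ltac:(lra)). nra. }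
  assert (Hmain : forall th, 0 <= th < 1 -> h1 k rho (u k th) <= 0 -> 1 - w ^ k <= th).
  { intros th Hth Hh. destruct (Req_dec th 0) as [->|Hne].
    - rewrite u_0 in Hh. pose proof (h1_1 k rho Hr). lra.
    - set (v := u k th) in *. assert (Hv : 0 < v < 1).
      { split; [apply u_pos; lra|apply u_lt1; auto; lra]. }
      destruct (h1_crit k rho v Hr Hv) as [Hx [Hxv Hc]].
      apply Hc in Hh. apply Hmax in Hh; auto.
      assert (exp (- L) <= exp (- - ln (1 - v))).
      { destruct Hh as [h|h]; [left; apply exp_increasing; lra|rewrite h; lra]. }
      assert (v <= w) by (unfold w; lra).
      pose proof (pow_incr v w k ltac:(lra)) as Hpi.
      assert (Hvk : v ^ k = 1 - th) by (unfold v; apply u_pow; auto; lra). lra. }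
  assert (Hz : h1 k rho (u k (1 - w ^ k)) = 0).
  { rewrite u_of_pow; auto. unfold h1.
    assert (INR k * w ^ (k - 1) / rho = L).
    { rewrite <- HgL. unfold gk. fold w. pose proof (INR_k_pos k Hk).
      pose proof (pow_lt w (k-1) Hw1). field. repeat split; lra. }
    unfold Rdiv in *. rewrite Ropp_mult_distr_l_reverse, H. unfold w. ring. }
  split.
  - unfold theta_star. apply glb_at.
    + split; [lra|]. lra.
    + intros t [Ht Hh]. destruct (Req_dec t 1) as [->|Hne]; [lra|]. apply Hmain; auto. lra.
  - intros th Hth. destruct (Rlt_le_dec 0 (h1 k rho (u k th))) as [h|h]; auto.
    apply Hmain in h; [lra|]. lra.
Qed.

Lemma theta_star_big k rho : (3 <= k)%nat -> rho_max k < rho -> theta_star k rho = 1.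
Proof.
  intros Hk Hr. destruct (rho_max_spec k Hk) as [Hub [xm [Hxm Hxm2]]].
  assert (Hrp : 0 < rho) by (pose proof (gk_pos k xm ltac:(lia) Hxm); lra).
  unfold theta_star. apply glb_at.
  - split; [lra|]. unfold u. destruct (Rle_dec (1 - 1) 0); [|lra].
    unfold h1. replace (k - 1)%nat with (S (k - 2)) by lia. simpl.
    replace (- (INR k * (0 * 0 ^ (k - 2))) / rho) with 0 by (field; lra). rewrite exp_0. lra.
  - intros t [Ht Hh]. destruct (Req_dec t 1) as [->|Hne]; [lra|]. exfalso.
    destruct (Req_dec t 0) as [->|Hne0].
    + rewrite u_0 in Hh. pose proof (h1_1 k rho Hrp). lra.
    + set (v := u k t) in *. assert (Hv : 0 < v < 1).
      { split; [apply u_pos; lra|apply u_lt1; auto; lra]. }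
      destruct (h1_crit k rho v Hrp Hv) as [Hx [Hxv Hc]].
      apply Hc in Hh. pose proof (Hub _ Hx). lra.
Qed.

Definition D0 := fun t => 0 <= t < 1.

Definition cc k (Y1 Y2 : R -> R) s := (INR k * (1 - s) + -1 * Y1 s) * / Y2 s.
Definition I1f k (Y1 Y2 : R -> R) s := ln (lam_of (cc k Y1 Y2 s)) + - ((INR k - 1) / INR k) * ln (1 - s).
Definition I2f k (Y1 Y2 : R -> R) s :=
  ln (Y2 s) + lam_of (cc k Y1 Y2 s) + -1 * ln (exp (lam_of (cc k Y1 Y2 s)) - 1 - lam_of (cc k Y1 Y2 s)).

Definition Gd k (Y1 Y2 : R -> R) t := 0 <= t < 1 /\ 0 < Y1 t /\ 0 < Y2 t /\ 2 * Y2 t < INR k * (1 - t) - Y1 t.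

Lemma Gl_pos l : 0 < l -> Gl l = l ^ 2 / (exp l - 1 - l).
Proof. intro. unfold Gl. destruct (Req_EM_T l 0); [lra|auto]. Qed.

Lemma Gd_cc k Y1 Y2 t : Gd k Y1 Y2 t -> 2 < cc k Y1 Y2 t.
Proof.
  intros [H0 [H1 [H2 H3]]]. unfold cc.
  assert (0 < (INR k * (1 - t) - Y1 t - 2 * Y2 t) / Y2 t) by (apply Rdiv_lt_0_compat; lra).
  replace ((INR k * (1 - t) + -1 * Y1 t) * / Y2 t) with ((INR k * (1 - t) - Y1 t - 2 * Y2 t) / Y2 t + 2)
    by (field; lra). lra.
Qed.

Lemma F_vals k y1 y2 t : (3 <= k)%nat -> 0 <= t < 1 -> 0 < y1 -> 0 < y2 ->
  2 < (INR k * (1 - t) + -1 * y1) * / y2 ->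
  let l := lam_of ((INR k * (1 - t) + -1 * y1) * / y2) in
  F1 k y1 y2 t = -1 + (INR k - 1) * (y2 * (l^2 / (exp l - 1 - l)) / (INR k * (1 - t)) - y1 / (INR k * (1 - t))) /\
  F2 k y1 y2 t = - ((INR k - 1) * (y2 * (l^2 / (exp l - 1 - l)) / (INR k * (1 - t)))).
Proof.
  intros Hk Ht H1 H2 Hc l.
  assert (Hr : Rmax y1 0 = y1) by (apply Rmax_left; lra).
  assert (Hl : lam_of ((INR k * (1 - t) - Rmax y1 0) / y2) = l).
  { unfold l. f_equal. rewrite Hr. unfold Rdiv. ring. }
  destruct (lam_of_spec _ Hc) as [Hl0 _]. fold l in Hl0.
  unfold F1, F2, frak_p1, frak_p0. destruct (Rlt_dec 0 y2); [|lra].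
  rewrite Hl, Gl_pos, Hr; auto.
Qed.

Lemma ln1m_d t : t < 1 -> derivable_pt_lim (fun s => ln (1 - s)) t (- / (1 - t)).
Proof. intro. apply is_derive_Reals. auto_derive; [lra|field; lra]. Qed.

Lemma lnh_d l : 0 < l -> derivable_pt_lim (fun z => ln (exp z - 1 - z)) l ((exp l - 1) / (exp l - 1 - l)).
Proof. intro. pose proof (Eml_pos l H). apply is_derive_Reals. auto_derive; [lra|field; lra]. Qed.

Lemma N_d k t : derivable_pt_lim (fun s => INR k * (1 - s)) t (- INR k).
Proof. apply is_derive_Reals. auto_derive; [auto|ring]. Qed.

Lemma Gd_deriv k Y1 Y2 t : (3 <= k)%nat -> Gd k Y1 Y2 t ->
  deriv_within D0 Y1 (F1 k (Y1 t) (Y2 t) t) t ->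
  deriv_within D0 Y2 (F2 k (Y1 t) (Y2 t) t) t ->
  deriv_within D0 (I1f k Y1 Y2) 0 t /\ deriv_within D0 (I2f k Y1 Y2) 0 t.
Proof.
  intros Hk HG H1 H2. pose proof (Gd_cc k Y1 Y2 t HG) as Hc.
  destruct HG as [Ht [Hy1 [Hy2 Hy3]]].
  pose proof (INR_k_pos k Hk) as HK.
  destruct (F_vals k (Y1 t) (Y2 t) t Hk Ht Hy1 Hy2 Hc) as [EF1 EF2].
  fold (cc k Y1 Y2 t) in EF1, EF2.
  set (l := lam_of (cc k Y1 Y2 t)) in *.
  destruct (lam_of_spec _ Hc) as [Hl0 Hl1]. fold l in Hl0, Hl1.
  pose proof (Eml_pos l Hl0) as HD.
  pose proof (f1'_pos l Hl0) as Hf'.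
  assert (Hnum : 0 < (exp l - 1)^2 - l^2 * exp l).
  { unfold f1' in Hf'. assert (0 < (exp l - 1 - l)^2) by (apply pow2_gt_0; lra).
    replace ((exp l - 1)^2 - l^2 * exp l) with (((exp l - 1)^2 - l^2 * exp l) / (exp l - 1 - l)^2 * (exp l - 1 - l)^2) by (field; lra).
    apply Rmult_lt_0_compat; auto. }
  assert (Hy1e : Y1 t = INR k * (1 - t) - Y2 t * (l * (exp l - 1) / (exp l - 1 - l))).
  { unfold f1 in Hl1. rewrite Hl1. unfold cc. field. lra. }
  assert (dN := dw_of_dpl D0 _ _ t (N_d k t)).
  assert (dNm := dw_plus D0 _ _ _ _ t dN (dw_scal D0 _ _ (-1) t H1)).
  assert (dI := dw_inv D0 Y2 _ t ltac:(lra) H2).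
  assert (dc := dw_mult D0 _ _ _ _ t dNm dI).
  assert (dl := dw_comp D0 lam_of (cc k Y1 Y2) _ _ t dc (lam_of_deriv _ Hc)).
  fold l in dl.
  split.
  - assert (dln := dw_comp D0 ln _ _ _ t dl (derivable_pt_lim_ln l Hl0)).
    assert (dln1 := dw_of_dpl D0 _ _ t (ln1m_d t ltac:(lra))).
    assert (dI1 := dw_plus D0 _ _ _ _ t dln (dw_scal D0 _ _ (- ((INR k - 1) / INR k)) t dln1)).
    eapply dw_val; [|exact dI1].
    rewrite EF1, EF2, Hy1e. unfold f1'. cbv beta. field.
    repeat split; lra.
  - assert (dln2 := dw_comp D0 ln Y2 _ _ t H2 (derivable_pt_lim_ln _ Hy2)).
    assert (dlh := dw_comp D0 (fun z => ln (exp z - 1 - z)) (fun s => lam_of (cc k Y1 Y2 s)) _ _ t dl (lnh_d l Hl0)).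
    assert (dI2 := dw_plus D0 _ _ _ _ t (dw_plus D0 _ _ _ _ t dln2 dl) (dw_scal D0 _ _ (-1) t dlh)).
    eapply dw_val; [|exact dI2].
    rewrite EF1, EF2, Hy1e. unfold f1'. cbv beta. field.
    repeat split; lra.
Qed.

Lemma interior_D0 (f : R -> R) d x : 0 < x < 1 -> deriv_within D0 f d x -> derivable_pt_lim f x d.
Proof.
  intros Hx H. apply (dpl_of_dw D0 f d x (Rmin x (1 - x))); auto.
  - apply Rmin_pos; lra.
  - intros t Ht. unfold D0. pose proof (Rmin_l x (1 - x)). pose proof (Rmin_r x (1 - x)).
    rewrite Rabs_lt_between in Ht. lra.
Qed.

Lemma const_on f T : 0 < T <= 1 -> (forall t, 0 <= t < T -> deriv_within D0 f 0 t) ->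
  forall t, 0 <= t < T -> f t = f 0.
Proof.
  intros HT Hd.
  assert (Hst : forall s t, 0 < s -> s < t -> t < T -> f t = f s).
  { intros s t Hs Hst Ht.
    destruct (MVT_gen f s t (fun _ => 0)) as [c [_ Hc]].
    - intros x Hx. rewrite Rmin_left, Rmax_right in Hx by lra.
      apply is_derive_Reals. apply interior_D0; [lra|]. apply Hd. lra.
    - intros x Hx. rewrite Rmin_left, Rmax_right in Hx by lra.
      apply derivable_continuous_pt. exists 0. apply interior_D0; [lra|]. apply Hd. lra.
    - lra. }
  intros t Ht. destruct (Req_dec t 0) as [->|Hne]; auto.
  apply Rminus_diag_uniq. apply Rabs_eq_0.
  destruct (Rle_lt_dec (Rabs (f t - f 0)) 0) as [h|h]; [pose proof (Rabs_pos (f t - f 0)); lra|exfalso].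
  destruct (dw_cont D0 f 0 0 (Hd 0 ltac:(lra)) _ h) as [d [Hd0 Hd1]].
  set (s := Rmin t d / 2).
  assert (Hs : 0 < s <= t / 2 /\ s <= d / 2).
  { unfold s. pose proof (Rmin_l t d). pose proof (Rmin_r t d). pose proof (Rmin_pos t d ltac:(lra) Hd0). lra. }
  assert (Hfs : f t = f s) by (apply Hst; lra).
  assert (Rabs (s - 0) < d) by (rewrite Rminus_0_r, Rabs_right; lra).
  specialize (Hd1 s ltac:(unfold D0; lra) H). rewrite <- Hfs in Hd1. lra.
Qed.

Definition mu k rho t := INR k / rho * exp ((INR k - 1) / INR k * ln (1 - t)).
Definition Z1 k rho t := INR k * (1 - t) - rho * mu k rho t * (1 - exp (- mu k rho t)).
Definition Z2 k rho t := rho * (1 - exp (- mu k rho t) - mu k rho t * exp (- mu k rho t)).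

Lemma mu_pos k rho t : (3 <= k)%nat -> 0 < rho -> 0 < mu k rho t.
Proof.
  intros Hk Hr. pose proof (INR_k_pos k Hk). unfold mu.
  apply Rmult_lt_0_compat; [apply Rdiv_lt_0_compat; lra|apply exp_pos].
Qed.

Lemma mu_0 k rho : mu k rho 0 = INR k / rho.
Proof. unfold mu. rewrite Rminus_0_r, ln_1, Rmult_0_r, exp_0. ring. Qed.

Lemma on_G k rho (Y1 Y2 : R -> R) T : (3 <= k)%nat -> 0 < rho ->
  Y1 0 = INR k * exp (- (INR k / rho)) ->
  Y2 0 = rho * (1 - exp (- (INR k / rho))) - INR k * exp (- (INR k / rho)) ->
  (forall t, 0 <= t < 1 ->
      deriv_within D0 Y1 (F1 k (Y1 t) (Y2 t) t) t /\
      deriv_within D0 Y2 (F2 k (Y1 t) (Y2 t) t) t) ->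
  0 < T <= 1 -> (forall t, 0 <= t < T -> Gd k Y1 Y2 t) ->
  forall t, 0 <= t < T -> Y1 t = Z1 k rho t /\ Y2 t = Z2 k rho t.
Proof.
  intros Hk Hr HY10 HY20 Hd HT HG.
  pose proof (INR_k_pos k Hk) as HK.
  assert (HI : forall t, 0 <= t < T -> deriv_within D0 (I1f k Y1 Y2) 0 t /\ deriv_within D0 (I2f k Y1 Y2) 0 t).
  { intros t Ht. destruct (Hd t ltac:(lra)). apply Gd_deriv; auto. }
  assert (C1 := const_on (I1f k Y1 Y2) T HT (fun t Ht => proj1 (HI t Ht))).
  assert (C2 := const_on (I2f k Y1 Y2) T HT (fun t Ht => proj2 (HI t Ht))).
  set (m := INR k / rho).
  assert (Hm : 0 < m) by (unfold m; apply Rdiv_lt_0_compat; lra).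
  assert (Hrho : rho = INR k / m) by (unfold m; field; lra).
  pose proof (Eml_pos m Hm) as HDm. pose proof (exp_pos m) as HEm.
  assert (Hcc0 : cc k Y1 Y2 0 = f1 m).
  { unfold cc, f1. rewrite HY10, HY20. fold m. rewrite exp_Ropp. rewrite Hrho.
    assert (0 < INR k * (exp m - 1 - m)) by nra.
    field. repeat split; try lra. }
  assert (Hl0 : lam_of (cc k Y1 Y2 0) = m) by (rewrite Hcc0; apply lam_of_f1; auto).
  assert (HY20' : Y2 0 = rho * exp (- m) * (exp m - 1 - m)).
  { rewrite HY20. fold m. rewrite exp_Ropp, Hrho. field. lra. }
  intros t Ht. specialize (C1 t Ht). specialize (C2 t Ht).
  pose proof (Gd_cc k Y1 Y2 t (HG t Ht)) as Hct.
  destruct (HG t Ht) as [_ [Hy1 [Hy2 _]]].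
  destruct (lam_of_spec _ Hct) as [Hlt1 Hlt2].
  set (l := lam_of (cc k Y1 Y2 t)) in *.
  unfold I1f, I2f in C1, C2. fold l in C1, C2. rewrite Hl0 in C1, C2.
  rewrite Rminus_0_r, ln_1, Rmult_0_r, Rplus_0_r in C1.
  assert (Hlmu : l = mu k rho t).
  { unfold mu. fold m. rewrite <- (exp_ln l Hlt1), <- (exp_ln m Hm), <- exp_plus. f_equal. lra. }
  assert (Hy2e : Y2 t = Z2 k rho t).
  { assert (ln (Y2 t) = ln (rho * exp (- l) * (exp l - 1 - l))).
    { pose proof (Eml_pos l Hlt1). rewrite HY20' in C2.
      rewrite !ln_mult in *; try apply exp_pos; try lra;
        try (apply Rmult_lt_0_compat; auto; apply exp_pos).
      rewrite !ln_exp in *. lra. }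
    apply ln_inv in H; auto.
    - rewrite H. unfold Z2. rewrite <- Hlmu. rewrite exp_Ropp. field. apply Rgt_not_eq, exp_pos.
    - pose proof (Eml_pos l Hlt1). apply Rmult_lt_0_compat; [apply Rmult_lt_0_compat; auto; apply exp_pos|lra]. }
  split; auto.
  unfold f1 in Hlt2. unfold cc in Hlt2.
  assert (Hy1e : Y1 t = INR k * (1 - t) - Y2 t * (l * (exp l - 1) / (exp l - 1 - l))).
  { rewrite Hlt2. field. lra. }
  rewrite Hy1e, Hy2e. unfold Z1, Z2. rewrite <- Hlmu. rewrite exp_Ropp.
  pose proof (Eml_pos l Hlt1). pose proof (exp_pos l). field. lra.
Qed.

Lemma Z2_pos k rho t : (3 <= k)%nat -> 0 < rho -> 0 < Z2 k rho t.
Proof.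
  intros Hk Hr. pose proof (mu_pos k rho t Hk Hr) as Hm. unfold Z2.
  set (m := mu k rho t) in *. pose proof (Eml_pos m Hm). pose proof (exp_pos m).
  rewrite exp_Ropp.
  replace (rho * (1 - / exp m - m * / exp m)) with (rho * (exp m - 1 - m) / exp m) by (field; lra).
  apply Rdiv_lt_0_compat; nra.
Qed.

Lemma Z_gap k rho t : (3 <= k)%nat -> 0 < rho -> 2 * Z2 k rho t < INR k * (1 - t) - Z1 k rho t.
Proof.
  intros Hk Hr. pose proof (mu_pos k rho t Hk Hr) as Hm. unfold Z1, Z2.
  set (m := mu k rho t) in *. pose proof (Eml_pos m Hm). pose proof (exp_pos m).
  pose proof (f1_gt2 m Hm). unfold f1 in H1.
  apply Rlt_div_r in H1; [|lra].
  rewrite exp_Ropp.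
  assert (0 < rho * (m * (exp m - 1) - 2 * (exp m - 1 - m)) / exp m) by (apply Rdiv_lt_0_compat; nra).
  assert (INR k * (1 - t) - (INR k * (1 - t) - rho * m * (1 - / exp m)) - 2 * (rho * (1 - / exp m - m * / exp m))
    = rho * (m * (exp m - 1) - 2 * (exp m - 1 - m)) / exp m) by (field; lra).
  lra.
Qed.

Lemma Z_init k rho : (3 <= k)%nat -> 0 < rho ->
  Z1 k rho 0 = INR k * exp (- (INR k / rho)) /\
  Z2 k rho 0 = rho * (1 - exp (- (INR k / rho))) - INR k * exp (- (INR k / rho)).
Proof.
  intros Hk Hr. pose proof (INR_k_pos k Hk). unfold Z1, Z2. rewrite mu_0. split; field; lra.
Qed.

Lemma Z1_cont k rho t : t < 1 -> continuity_pt (Z1 k rho) t.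
Proof.
  intro Ht. apply derivable_continuous_pt. unfold Z1, mu.
  eexists. apply is_derive_Reals. auto_derive; [lra|reflexivity].
Qed.

Lemma Z2_cont k rho t : t < 1 -> continuity_pt (Z2 k rho) t.
Proof.
  intro Ht. apply derivable_continuous_pt. unfold Z2, mu.
  eexists. apply is_derive_Reals. auto_derive; [lra|reflexivity].
Qed.

Lemma eq_at_limit f g T : 0 < T < 1 -> cont_within D0 f T -> cont_within D0 g T ->
  (forall t, 0 <= t < T -> f t = g t) -> f T = g T.
Proof.
  intros HT Hf Hg He. apply Rminus_diag_uniq. apply Rabs_eq_0.
  destruct (Rle_lt_dec (Rabs (f T - g T)) 0) as [h|h]; [pose proof (Rabs_pos (f T - g T)); lra|exfalso].
  destruct (Hf (Rabs (f T - g T) / 2) ltac:(lra)) as [d1 [Hd1 H1]].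
  destruct (Hg (Rabs (f T - g T) / 2) ltac:(lra)) as [d2 [Hd2 H2]].
  set (s := T - Rmin T (Rmin d1 d2) / 2).
  assert (Hm : 0 < Rmin T (Rmin d1 d2)) by (repeat apply Rmin_pos; lra).
  pose proof (Rmin_l T (Rmin d1 d2)). pose proof (Rmin_r T (Rmin d1 d2)).
  pose proof (Rmin_l d1 d2). pose proof (Rmin_r d1 d2).
  assert (Hs : 0 <= s < T) by (unfold s; lra).
  assert (Q1 : Rabs (s - T) < d1) by (rewrite Rabs_left; unfold s; lra).
  assert (Q2 : Rabs (s - T) < d2) by (rewrite Rabs_left; unfold s; lra).
  specialize (H1 s ltac:(unfold D0; lra) Q1). specialize (H2 s ltac:(unfold D0; lra) Q2).
  rewrite (He s Hs) in H1.
  assert (Rabs (f T - g T) <= Rabs (g s - f T) + Rabs (g s - g T)).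
  { replace (f T - g T) with (- (g s - f T) + (g s - g T)) by ring.
    eapply Rle_trans; [apply Rabs_triang|]. rewrite Rabs_Ropp. lra. }
  lra.
Qed.

Lemma ident k rho (Y1 Y2 : R -> R) ts : (3 <= k)%nat -> 0 < rho ->
  Y1 0 = INR k * exp (- (INR k / rho)) ->
  Y2 0 = rho * (1 - exp (- (INR k / rho))) - INR k * exp (- (INR k / rho)) ->
  (forall t, 0 <= t < 1 ->
      deriv_within D0 Y1 (F1 k (Y1 t) (Y2 t) t) t /\
      deriv_within D0 Y2 (F2 k (Y1 t) (Y2 t) t) t) ->
  0 < ts < 1 -> (forall t, 0 <= t < ts -> 0 < Z1 k rho t) ->
  forall t, 0 <= t <= ts -> Y1 t = Z1 k rho t /\ Y2 t = Z2 k rho t.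
Proof.
  intros Hk Hr HY10 HY20 Hd Hts HZ1.
  destruct (Z_init k rho Hk Hr) as [HZ10 HZ20].
  assert (HcY1 : forall t, 0 <= t < 1 -> cont_within D0 Y1 t) by (intros t Ht; eapply dw_cont, (proj1 (Hd t Ht))).
  assert (HcY2 : forall t, 0 <= t < 1 -> cont_within D0 Y2 t) by (intros t Ht; eapply dw_cont, (proj2 (Hd t Ht))).
  assert (HGz : forall t, 0 <= t < ts -> Y1 t = Z1 k rho t -> Y2 t = Z2 k rho t -> Gd k Y1 Y2 t).
  { intros t Ht E1 E2. unfold Gd. rewrite E1, E2.
    split; [lra|]. split; [apply HZ1; auto|]. split; [apply Z2_pos; auto|apply Z_gap; auto]. }
  set (S := fun t => 0 <= t <= ts /\ forall s, 0 <= s <= t -> Gd k Y1 Y2 s).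
  assert (HS0 : S 0).
  { split; [lra|]. intros s Hs. replace s with 0 by lra. apply HGz; [lra|rewrite HY10; auto|rewrite HY20; auto]. }
  destruct (completeness S) as [T [HT1 HT2]].
  { exists ts. intros t [Ht _]. lra. }
  { exists 0. auto. }
  assert (HT0 : 0 <= T) by (apply HT1; auto).
  assert (HTts : T <= ts) by (apply HT2; intros t [Ht _]; lra).
  assert (ClA : forall s, 0 <= s < T -> Gd k Y1 Y2 s).
  { intros s Hs. destruct (classic (exists t, S t /\ s < t)) as [[t [[Ht1 Ht2] Hst]]|Hn].
    - apply Ht2. lra.
    - assert (T <= s); [|lra]. apply HT2. intros t St.
      destruct (Rle_lt_dec t s) as [h|h]; auto. exfalso. apply Hn. exists t. auto. }
  assert (ClOn : forall s, 0 <= s < T -> Y1 s = Z1 k rho s /\ Y2 s = Z2 k rho s).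
  { intros s Hs. apply (on_G k rho Y1 Y2 T); auto; lra. }
  assert (ClB : Y1 T = Z1 k rho T /\ Y2 T = Z2 k rho T).
  { destruct (Req_dec T 0) as [->|HTn]; [rewrite HY10, HY20; auto|].
    split; apply eq_at_limit; try lra.
    - apply HcY1; lra.
    - apply cw_of_cpt, Z1_cont; lra.
    - intros t Ht; apply ClOn; auto.
    - apply HcY2; lra.
    - apply cw_of_cpt, Z2_cont; lra.
    - intros t Ht; apply ClOn; auto. }
  assert (ClC : T = ts).
  { destruct (Req_dec T ts) as [h|h]; auto. exfalso.
    assert (HGT : Gd k Y1 Y2 T) by (apply HGz; [lra|apply ClB|apply ClB]).
    destruct HGT as [_ [G1 [G2 G3]]].
    assert (Hq : cont_within D0 (fun s => INR k * (1 - s) + -1 * Y1 s + -2 * Y2 s) T).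
    { apply cw_plus; [apply cw_plus|]; [| apply cw_scal, HcY1; lra| apply cw_scal, HcY2; lra].
      apply cw_of_cpt. apply derivable_continuous_pt. eexists. apply N_d. }
    destruct (HcY1 T ltac:(lra) (Y1 T) G1) as [d1 [Hd1 P1]].
    destruct (HcY2 T ltac:(lra) (Y2 T) G2) as [d2 [Hd2 P2]].
    destruct (Hq (INR k * (1 - T) + -1 * Y1 T + -2 * Y2 T) ltac:(lra)) as [d3 [Hd3 P3]].
    set (d := Rmin (Rmin d1 d2) (Rmin d3 (ts - T))).
    assert (Hdp : 0 < d) by (unfold d; repeat apply Rmin_pos; lra).
    assert (Hdd : d <= d1 /\ d <= d2 /\ d <= d3 /\ d <= ts - T).
    { unfold d. pose proof (Rmin_l (Rmin d1 d2) (Rmin d3 (ts - T))).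
      pose proof (Rmin_r (Rmin d1 d2) (Rmin d3 (ts - T))).
      pose proof (Rmin_l d1 d2). pose proof (Rmin_r d1 d2).
      pose proof (Rmin_l d3 (ts - T)). pose proof (Rmin_r d3 (ts - T)). lra. }
    assert (T + d / 2 <= T); [|lra].
    apply HT1. split; [lra|].
    intros s Hs. destruct (Rlt_le_dec s T) as [h1|h1]; [apply ClA; lra|].
    assert (Ds : D0 s) by (unfold D0; lra).
    assert (Hsd : Rabs (s - T) < d) by (rewrite Rabs_right; lra).
    specialize (P1 s Ds ltac:(lra)). specialize (P2 s Ds ltac:(lra)). specialize (P3 s Ds ltac:(lra)).
    rewrite Rabs_lt_between in P1, P2, P3.
    unfold Gd. split; [lra|]. split; [lra|]. split; lra. }
  subst T. intros t Ht. destruct (Rlt_le_dec t ts) as [h|h].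
  - apply ClOn. lra.
  - replace t with ts by lra. auto.
Qed.

Lemma exp_pow a n : exp a ^ n = exp (INR n * a).
Proof.
  rewrite <- (exp_ln (exp a ^ n)) by (apply pow_lt, exp_pos).
  rewrite ln_pow by apply exp_pos. rewrite ln_exp. auto.
Qed.

Lemma u_km1 k t : (3 <= k)%nat -> t < 1 -> u k t ^ (k - 1) = exp ((INR k - 1) / INR k * ln (1 - t)).
Proof.
  intros Hk Ht. rewrite u_eq; auto. unfold Rpower. rewrite exp_pow.
  rewrite minus_INR by lia. simpl (INR 1). f_equal. unfold Rdiv. ring.
Qed.

Lemma mu_u k rho t : (3 <= k)%nat -> 0 < rho -> t < 1 -> mu k rho t = INR k * u k t ^ (k - 1) / rho.
Proof. intros Hk Hr Ht. unfold mu. rewrite u_km1; auto. field. lra. Qed.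

Lemma Z1_h1 k rho t : (3 <= k)%nat -> 0 < rho -> t < 1 ->
  Z1 k rho t = INR k * u k t ^ (k - 1) * h1 k rho (u k t).
Proof.
  intros Hk Hr Ht. unfold Z1, h1. rewrite (mu_u k rho t Hk Hr Ht).
  rewrite <- (u_pow k t Hk Ht). replace k with (S (k - 1)) at 3 by lia. simpl.
  unfold Rdiv. rewrite Ropp_mult_distr_l. field. lra.
Qed.

Lemma main_a k y1 y2 rho L : (3 <= k)%nat -> is_y_solution k y1 y2 -> 0 < rho -> 0 < L ->
  gk k L = rho -> (forall mu, 0 < mu -> rho <= gk k mu -> mu <= L) ->
  theta_star k rho = 1 - (1 - exp (- L)) ^ k /\
  0 < 1 - (1 - exp (- L)) ^ k < 1 /\
  y1 (1 - (1 - exp (- L)) ^ k) rho = 0 /\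
  y2 (1 - (1 - exp (- L)) ^ k) rho = INR k / f1 L * (1 - (1 - (1 - exp (- L)) ^ k)) /\
  (forall t, 0 <= t <= 1 - (1 - exp (- L)) ^ k -> y1 t rho = Z1 k rho t /\ y2 t rho = Z2 k rho t).
Proof.
  intros Hk Hsol Hr HL HgL Hmax.
  destruct (theta_star_val k rho L Hk Hr HL HgL Hmax) as [Hts Hh].
  set (w := 1 - exp (- L)) in *.
  destruct (one_m_exp_bounds L HL) as [[Hw1 Hw2] _]. fold w in Hw1, Hw2.
  assert (Hwk : 0 < w ^ k < 1).
  { split; [apply pow_lt; auto|].
    destruct k; [lia|]. simpl. pose proof (pow_le1 w k ltac:(lra)). nra. }
  set (ts := 1 - w ^ k) in *.
  assert (Hts01 : 0 < ts < 1) by (unfold ts; lra).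
  destruct (Hsol rho Hr) as [H10 [H20 Hd]].
  assert (Hid := ident k rho (fun t => y1 t rho) (fun t => y2 t rho) ts Hk Hr H10 H20).
  assert (Hid' : forall t, 0 <= t <= ts -> y1 t rho = Z1 k rho t /\ y2 t rho = Z2 k rho t).
  { apply Hid; auto.
    - intros t Ht. destruct (Hd t Ht) as [_ [A B]]. split; auto.
    - intros t Ht. rewrite Z1_h1; auto; try lra.
      apply Rmult_lt_0_compat; [apply Rmult_lt_0_compat|].
      + pose proof (INR_k_pos k Hk); lra.
      + apply pow_lt, u_pos; lra.
      + apply Hh. auto. }
  assert (Huts : u k ts = w) by (unfold ts; apply u_of_pow; auto).
  assert (Hmu : mu k rho ts = L).
  { rewrite mu_u; auto; try lra. rewrite Huts. rewrite <- HgL. unfold gk. fold w.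
    pose proof (INR_k_pos k Hk). pose proof (pow_lt w (k-1) Hw1). field. repeat split; lra. }
  destruct (Hid' ts ltac:(lra)) as [E1 E2].
  split; auto. split; auto. split.
  - rewrite E1. rewrite Z1_h1; auto; try lra. rewrite Huts. unfold h1.
    assert (INR k * w ^ (k - 1) / rho = L).
    { rewrite <- HgL. unfold gk. fold w. pose proof (INR_k_pos k Hk).
      pose proof (pow_lt w (k-1) Hw1). field. repeat split; lra. }
    unfold Rdiv in *. rewrite <- Ropp_mult_distr_l, H. unfold w. ring.
  - split; auto. rewrite E2. unfold Z2. rewrite Hmu. unfold ts, f1.
    replace (1 - (1 - w ^ k)) with (w ^ k) by ring.
    assert (HgL' : INR k * w ^ (k - 1) = rho * L).
    { rewrite <- HgL. unfold gk. fold w. field. lra. }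
    assert (Hwk1 : w ^ k = w * w ^ (k - 1)) by (replace k with (S (k - 1)) at 1 by lia; reflexivity).
    rewrite Hwk1.
    pose proof (Eml_pos L HL). pose proof (exp_pos L).
    assert (Hw : w = (exp L - 1) / exp L) by (unfold w; rewrite exp_Ropp; field; lra).
    pose proof (pow_lt w (k-1) Hw1).
    assert (Hk' : INR k = rho * L / w ^ (k - 1)) by (unfold Rdiv; rewrite <- HgL', Rmult_assoc, Rinv_r; lra).
    rewrite Hk'. set (P := w ^ (k - 1)) in *. rewrite Hw, exp_Ropp. field. repeat split; lra.
Qed.

Lemma lambda_k_spec k : (3 <= k)%nat -> 0 < lambda_k k /\ f1 (lambda_k k) = INR k.
Proof.
  intro Hk. pose proof (INR_k_pos k Hk). unfold lambda_k. apply epsilon_spec.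
  apply f1_surj. lra.
Qed.

Lemma lam_of_k k : (3 <= k)%nat -> lam_of (INR k) = lambda_k k.
Proof.
  intro Hk. destruct (lambda_k_spec k Hk) as [H1 H2]. rewrite <- H2. apply lam_of_f1; auto.
Qed.

Lemma lambda_k_big k : (3 <= k)%nat -> (INR k - 1) * lambda_k k < exp (lambda_k k) - 1.
Proof.
  intro Hk. pose proof (INR_k_pos k Hk) as HK. destruct (lambda_k_spec k Hk) as [Hl Hf].
  set (K := INR k) in *. set (l := lambda_k k) in *.
  set (a := K * (K - 2) / (K - 1)).
  assert (Ha : K - 3/2 <= a) by (unfold a; apply Rle_div_r; lra || (apply Rle_div_r; nra)).
  assert (Ha0 : 0 < a) by lra.
  assert (Hfa : f1 a < K).
  { pose proof (exp_bound3 a Ha0). pose proof (Eml_pos a Ha0). unfold f1.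
    apply Rlt_div_l; [lra|].
    (* need a (E-1) < K (E-1-a) i.e. (K-a)(E-1) > K a ; K - a = K/(K-1) *)
    assert (HKa : K - a = K / (K - 1)) by (unfold a; field; lra).
    assert (E1 : exp a - 1 > (K - 1) * a).
    { assert (1 + a / 2 + a^2 / 6 > K - 1) by nra.
      assert (a + a^2/2 + a^3/6 > (K - 1) * a) by nra. lra. }
    assert (K * a = (K - a) * ((K - 1) * a)) by (rewrite HKa; field; lra).
    assert (0 < K - a) by (rewrite HKa; apply Rdiv_lt_0_compat; lra).
    nra. }
  assert (Hla : a < l).
  { destruct (Rlt_le_dec a l) as [h|h]; auto. destruct h as [h|h].
    - pose proof (f1_incr l a Hl h). lra.
    - subst l. rewrite h in Hf. lra. }
  pose proof (Eml_pos l Hl). unfold f1 in Hf.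
  assert (Hrel : l * (exp l - 1) = K * (exp l - 1 - l)).
  { rewrite <- Hf. field. lra. }
  assert (K - l > 0) by (pose proof (f1_gt_l l Hl); unfold f1 in H0; lra).
  (* (K-1) l < E - 1  <=> (K-1)(K-l) < K *)
  assert (HK1 : (K - 1) * (K - l) < K).
  { unfold a in Hla. apply Rlt_div_l in Hla; [|lra]. nra. }
  assert ((K - l) * (exp l - 1) = K * l) by lra.
  nra.
Qed.

Definition ell k x := ln (INR k) + (INR k - 1) * ln (1 - exp (- x)) - ln x.
Definition ell' k x := (INR k - 1) * (exp (- x) / (1 - exp (- x))) - / x.

Lemma gk_ell k x : (3 <= k)%nat -> 0 < x -> gk k x = exp (ell k x).
Proof.
  intros Hk Hx. pose proof (INR_k_pos k Hk). destruct (one_m_exp_bounds x Hx) as [[H1 H2] _].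
  pose proof (pow_lt (1 - exp (- x)) (k - 1) H1).
  rewrite <- (exp_ln (gk k x)) by (apply gk_pos; auto; lia). f_equal.
  unfold gk, ell, Rdiv. rewrite ln_mult, ln_mult, ln_Rinv, ln_pow; auto; try lra.
  all: try (rewrite minus_INR by lia; simpl (INR 1); ring).
  all: try (apply Rinv_0_lt_compat; auto).
  all: try (apply Rmult_lt_0_compat; lra).
Qed.

Lemma ell_deriv k x : 0 < x -> derivable_pt_lim (fun z => - ell k z) x (- ell' k x).
Proof.
  intro Hx. destruct (one_m_exp_bounds x Hx) as [[H1 H2] _]. unfold ell, ell'.
  apply is_derive_Reals. auto_derive; [repeat split; lra|field; lra].
Qed.

Lemma gk_decr k x y : (3 <= k)%nat -> lambda_k k <= x -> x < y -> gk k y < gk k x.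
Proof.
  intros Hk Hx Hxy. pose proof (INR_k_pos k Hk) as HK. destruct (lambda_k_spec k Hk) as [Hl Hf].
  pose proof (lambda_k_big k Hk) as Hb.
  assert (Hl2 : INR k - 2 < lambda_k k) by (pose proof (f1_lt _ Hl); lra).
  assert (Hh : forall c, lambda_k k <= c -> (INR k - 1) * c < exp c - 1).
  { intros c Hc. assert (exp (lambda_k k) - 1 - (INR k - 1) * lambda_k k <= exp c - 1 - (INR k - 1) * c); [|lra].
    apply (incr_MVT_le (fun z => exp z - 1 - (INR k - 1) * z) (fun z => exp z - (INR k - 1))); auto.
    - intros z _. apply is_derive_Reals. auto_derive; [auto|ring].
    - intros z Hz. assert (exp (lambda_k k) <= exp z) by (apply Rlt_le, exp_increasing; lra). nra. }
  rewrite !gk_ell by (auto; lra).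
  apply exp_increasing.
  assert (- ell k x < - ell k y); [|lra].
  apply (incr_MVT (fun z => - ell k z) (fun z => - ell' k z)); auto.
  - intros c Hc. apply ell_deriv. lra.
  - intros c Hc. unfold ell'. specialize (Hh c ltac:(lra)).
    pose proof (exp_pos c). rewrite exp_Ropp.
    assert (exp c > 1) by (rewrite <- exp_0; apply exp_increasing; lra).
    replace (/ exp c / (1 - / exp c)) with (/ (exp c - 1)) by (field; repeat split; lra).
    assert ((INR k - 1) * / (exp c - 1) < / c).
    { apply Rmult_lt_reg_r with ((exp c - 1) * c); [nra|].
      replace ((INR k - 1) * / (exp c - 1) * ((exp c - 1) * c)) with ((INR k - 1) * c) by (field; lra).
      replace (/ c * ((exp c - 1) * c)) with (exp c - 1) by (field; lra). lra. }
    lra.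
Qed.

Lemma rho_k_facts k : (3 <= k)%nat ->
  0 < rho_k k /\ rho_k k <= rho_max k /\
  forall L, 0 < L -> gk k L = rho_k k -> (forall mu, 0 < mu -> rho_k k <= gk k mu -> mu <= L) ->
  L = lambda_k k.
Proof.
  intro Hk. destruct (lambda_k_spec k Hk) as [Hl Hf]. destruct (rho_max_spec k Hk) as [Hub _].
  split; [apply gk_pos; auto; lia|]. split; [apply Hub; auto|].
  intros L HL HgL Hmax.
  assert (lambda_k k <= L) by (apply Hmax; auto; unfold rho_k; lra).
  destruct H as [h|h]; auto. pose proof (gk_decr k _ _ Hk (Rle_refl _) h). unfold rho_k in HgL. lra.
Qed.

Lemma cpt_of_ex_derive f x : ex_derive f x -> continuity_pt f x.
Proof. intros [l H]. apply derivable_continuous_pt. exists l. apply is_derive_Reals. auto. Qed.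

Lemma Z1_C2 k rho : exists d1 d2 : R -> R, forall t, t < 1 ->
  derivable_pt_lim (Z1 k rho) t (d1 t) /\ derivable_pt_lim d1 t (d2 t) /\ continuity_pt d2 t.
Proof.
  evar (d1 : R -> R).
  assert (Hd1 : forall t, t < 1 -> is_derive (Z1 k rho) t (d1 t)).
  { intros t Ht. unfold Z1, mu, d1. auto_derive; [lra|]. reflexivity. }
  evar (d2 : R -> R).
  assert (Hd2 : forall t, t < 1 -> is_derive d1 t (d2 t)).
  { intros t Ht. unfold d1, d2. auto_derive; [repeat split; lra|]. reflexivity. }
  assert (Hd3 : forall t, t < 1 -> ex_derive d2 t).
  { intros t Ht. unfold d2. auto_derive. repeat split; try lra; nra. }
  exists d1, d2. intros t Ht. split; [apply is_derive_Reals; auto|]. split; [apply is_derive_Reals; auto|].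
  apply cpt_of_ex_derive. auto.
Qed.

Lemma Z2_C2 k rho : exists d1 d2 : R -> R, forall t, t < 1 ->
  derivable_pt_lim (Z2 k rho) t (d1 t) /\ derivable_pt_lim d1 t (d2 t) /\ continuity_pt d2 t.
Proof.
  evar (d1 : R -> R).
  assert (Hd1 : forall t, t < 1 -> is_derive (Z2 k rho) t (d1 t)).
  { intros t Ht. unfold Z2, mu, d1. auto_derive; [lra|]. reflexivity. }
  evar (d2 : R -> R).
  assert (Hd2 : forall t, t < 1 -> is_derive d1 t (d2 t)).
  { intros t Ht. unfold d1, d2. auto_derive; [repeat split; try lra; nra|]. reflexivity. }
  assert (Hd3 : forall t, t < 1 -> ex_derive d2 t).
  { intros t Ht. unfold d2. auto_derive. repeat split; try lra; nra. }
  exists d1, d2. intros t Ht. split; [apply is_derive_Reals; auto|]. split; [apply is_derive_Reals; auto|].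
  apply cpt_of_ex_derive. auto.
Qed.

Lemma C2_from_Z (Y Z : R -> R) a b : b < 1 ->
  (exists d1 d2 : R -> R, forall t, t < 1 ->
     derivable_pt_lim Z t (d1 t) /\ derivable_pt_lim d1 t (d2 t) /\ continuity_pt d2 t) ->
  (forall t, a <= t <= b -> Y t = Z t) -> C2_on a b Y.
Proof.
  intros Hb [d1 [d2 Hd]] HYZ. exists d1, d2. intros x Hx.
  destruct (Hd x ltac:(lra)) as [A [B C]].
  split; [|split].
  - eapply dw_ext; [| exact Hx | apply dw_of_dpl; exact A]. intros t Ht. symmetry. auto.
  - apply dw_of_dpl. auto.
  - apply cw_of_cpt. auto.
Qed.

Definition psi z := z / (exp z - 1).
Definition psi' z := ((exp z - 1) - z * exp z) / (exp z - 1)^2.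

Lemma expm1_pos z : 0 < z -> 0 < exp z - 1.
Proof. intro. pose proof (Eml_pos z H). lra. Qed.

Lemma psi_d z : 0 < z -> derivable_pt_lim psi z (psi' z).
Proof.
  intro Hz. pose proof (expm1_pos z Hz). unfold psi, psi'.
  apply is_derive_Reals. auto_derive; [lra|field; lra].
Qed.

Lemma psi_c z : 0 < z -> continuity_pt psi z.
Proof. intro. apply derivable_continuous_pt. eexists. apply psi_d. auto. Qed.

Lemma psi'_c z : 0 < z -> continuity_pt psi' z.
Proof.
  intro Hz. pose proof (expm1_pos z Hz). apply cpt_of_ex_derive. unfold psi'.
  auto_derive. nra.
Qed.

Lemma f1'_c z : 0 < z -> continuity_pt f1' z.
Proof.
  intro Hz. pose proof (Eml_pos z Hz). apply cpt_of_ex_derive. unfold f1'.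
  auto_derive. nra.
Qed.

Lemma F_after k y1 y2 t : (3 <= k)%nat -> t < 1 -> y1 <= 0 -> 0 < y2 -> 2 * y2 < INR k * (1 - t) ->
  let l := lam_of (INR k * (1 - t) * / y2) in
  F1 k y1 y2 t = -1 + (INR k - 1) * psi l /\ F2 k y1 y2 t = - ((INR k - 1) * psi l).
Proof.
  intros Hk Ht H1 H2 H3 l. pose proof (INR_k_pos k Hk) as HK.
  assert (Hc : 2 < INR k * (1 - t) * / y2).
  { apply Rmult_lt_reg_r with y2; auto. rewrite Rmult_assoc, Rinv_l; lra. }
  destruct (lam_of_spec _ Hc) as [Hl1 Hl2]. fold l in Hl1, Hl2.
  assert (Hr : Rmax y1 0 = 0) by (apply Rmax_right; lra).
  assert (Hl : lam_of ((INR k * (1 - t) - Rmax y1 0) / y2) = l).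
  { unfold l. f_equal. rewrite Hr. unfold Rdiv. ring. }
  pose proof (Eml_pos l Hl1).
  assert (Hp1 : frak_p1 k y1 y2 t = psi l).
  { unfold frak_p1. destruct (Rlt_dec 0 y2); [|lra]. rewrite Hl, Gl_pos by auto.
    unfold f1 in Hl2. unfold psi.
    assert (Hrel : INR k * (1 - t) = y2 * (l * (exp l - 1) / (exp l - 1 - l))).
    { rewrite Hl2. field. lra. }
    rewrite Hrel. field. repeat split; try lra. }
  assert (Hp0 : frak_p0 k y1 y2 t = 0) by (unfold frak_p0; rewrite Hr; unfold Rdiv; ring).
  unfold F1, F2. rewrite Hp1, Hp0. split; ring.
Qed.

Lemma C2_after k (Y1 Y2 : R -> R) tau : (3 <= k)%nat -> 0 < tau < 1 -> Y1 tau = 0 -> Y2 tau = 1 - tau ->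
  (forall t, 0 <= t < 1 ->
      deriv_within D0 Y1 (F1 k (Y1 t) (Y2 t) t) t /\
      deriv_within D0 Y2 (F2 k (Y1 t) (Y2 t) t) t) ->
  F1 k (Y1 tau) (Y2 tau) tau < 0 ->
  exists eps, 0 < eps /\ C2_on tau (tau + eps) Y1 /\ C2_on tau (tau + eps) Y2.
Proof.
  intros Hk Htau HY1 HY2 Hd Hneg. pose proof (INR_k_pos k Hk) as HK.
  set (d := F1 k (Y1 tau) (Y2 tau) tau) in *.
  destruct (proj1 (Hd tau ltac:(lra)) (- d / 2) ltac:(lra)) as [d1 [Hd1 P1]]. fold d in P1.
  assert (HcY2 : forall t, 0 <= t < 1 -> cont_within D0 Y2 t) by (intros t Ht; eapply dw_cont, (proj2 (Hd t Ht))).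
  assert (HcY1 : forall t, 0 <= t < 1 -> cont_within D0 Y1 t) by (intros t Ht; eapply dw_cont, (proj1 (Hd t Ht))).
  assert (Hq : cont_within D0 (fun s => INR k * (1 - s) + -2 * Y2 s) tau).
  { apply cw_plus; [|apply cw_scal, HcY2; lra].
    apply cw_of_cpt. apply derivable_continuous_pt. eexists. apply N_d. }
  destruct (Hq ((INR k - 2) * (1 - tau)) ltac:(nra)) as [d2 [Hd2 P2]].
  destruct (HcY2 tau ltac:(lra) (1 - tau) ltac:(lra)) as [d3 [Hd3 P3]].
  set (eps := Rmin (Rmin d1 d2) (Rmin d3 (1 - tau)) / 2).
  assert (Heps : 0 < eps).
  { unfold eps. assert (0 < Rmin (Rmin d1 d2) (Rmin d3 (1 - tau))) by (repeat apply Rmin_pos; lra). lra. }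
  assert (Hepsb : eps < d1 /\ eps < d2 /\ eps < d3 /\ eps < 1 - tau).
  { unfold eps. pose proof (Rmin_l (Rmin d1 d2) (Rmin d3 (1 - tau))).
    pose proof (Rmin_r (Rmin d1 d2) (Rmin d3 (1 - tau))).
    pose proof (Rmin_l d1 d2). pose proof (Rmin_r d1 d2).
    pose proof (Rmin_l d3 (1 - tau)). pose proof (Rmin_r d3 (1 - tau)). lra. }
  set (D1 := fun t => tau <= t <= tau + eps).
  assert (HD1 : forall t, D1 t -> D0 t) by (unfold D1, D0; intros; lra).
  assert (Hreg : forall t, D1 t -> Y1 t <= 0 /\ 0 < Y2 t /\ 2 * Y2 t < INR k * (1 - t)).
  { intros t Ht. unfold D1 in Ht.
    assert (Hdist : Rabs (t - tau) <= eps) by (rewrite Rabs_right; lra).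
    specialize (P1 t (HD1 t Ht) ltac:(lra)). specialize (P2 t (HD1 t Ht) ltac:(lra)).
    specialize (P3 t (HD1 t Ht) ltac:(lra)).
    rewrite (Rabs_right (t - tau)) in P1 by lra. rewrite HY1 in P1.
    pose proof (Rle_abs (Y1 t - 0 - d * (t - tau))) as P1'.
    apply Rabs_def2 in P2. apply Rabs_def2 in P3.
    rewrite HY2 in P2, P3. split; [nra|]. split; lra. }
  set (ct := fun t => INR k * (1 - t) * / Y2 t).
  set (lamc := fun t => lam_of (ct t)).
  assert (Hct : forall t, D1 t -> 2 < ct t).
  { intros t Ht. destruct (Hreg t Ht) as [_ [A B]]. unfold ct.
    apply Rmult_lt_reg_r with (Y2 t); auto. rewrite Rmult_assoc, Rinv_l; lra. }
  assert (Hlam : forall t, D1 t -> 0 < lamc t) by (intros t Ht; apply lam_of_spec, Hct; auto).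
  assert (HF : forall t, D1 t -> F1 k (Y1 t) (Y2 t) t = -1 + (INR k - 1) * psi (lamc t) /\
                               F2 k (Y1 t) (Y2 t) t = - ((INR k - 1) * psi (lamc t))).
  { intros t Ht. destruct (Hreg t Ht) as [A [B C]]. apply F_after; auto. unfold D1 in Ht; lra. }
  set (dd := fun t => psi' (lamc t) * (/ f1' (lamc t) * ((- INR k) * / Y2 t +
              INR k * (1 - t) * ((INR k - 1) * psi (lamc t) / (Y2 t * Y2 t))))).
  assert (Hdpsi : forall x, D1 x -> deriv_within D1 (fun t => psi (lamc t)) (dd x) x).
  { intros x Hx. destruct (Hreg x Hx) as [A [B C]].
    assert (dY2 : deriv_within D1 Y2 (F2 k (Y1 x) (Y2 x) x) x)
      by (eapply dw_sub; [apply HD1|apply (proj2 (Hd x (HD1 x Hx)))]).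
    assert (dN := dw_of_dpl D1 _ _ x (N_d k x)).
    assert (dI := dw_inv D1 Y2 _ x ltac:(lra) dY2).
    assert (dc := dw_mult D1 _ _ _ _ x dN dI).
    assert (dl := dw_comp D1 lam_of ct _ _ x dc (lam_of_deriv _ (Hct x Hx))).
    assert (dp := dw_comp D1 psi (fun t => lam_of (ct t)) _ _ x dl (psi_d _ (Hlam x Hx))).
    eapply dw_val; [|exact dp].
    destruct (HF x Hx) as [_ E2]. rewrite E2. unfold dd. fold (lamc x).
    pose proof (f1'_pos _ (Hlam x Hx)). field. split; lra. }
  assert (Hcdd : forall x, D1 x -> cont_within D1 dd x).
  { intros x Hx. destruct (Hreg x Hx) as [A [B C]].
    assert (cY2 : cont_within D1 Y2 x) by (eapply cw_sub; [apply HD1|apply HcY2; apply HD1; auto]).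
    assert (cN : cont_within D1 (fun t => INR k * (1 - t)) x)
      by (apply cw_of_cpt; apply derivable_continuous_pt; eexists; apply N_d).
    assert (cI : cont_within D1 (fun t => / Y2 t) x) by (apply cw_inv; auto; lra).
    assert (cct : cont_within D1 ct x) by (apply cw_mult; auto).
    assert (clam : cont_within D1 lamc x) by (apply (cw_comp D1 lam_of ct x cct); apply lam_of_cont, Hct; auto).
    assert (cpsi' := cw_comp D1 psi' lamc x clam (psi'_c _ (Hlam x Hx))).
    assert (cpsi := cw_comp D1 psi lamc x clam (psi_c _ (Hlam x Hx))).
    assert (cf1' := cw_comp D1 f1' lamc x clam (f1'_c _ (Hlam x Hx))).
    assert (cif1' : cont_within D1 (fun t => / f1' (lamc t)) x).
    { apply cw_inv; auto. pose proof (f1'_pos _ (Hlam x Hx)). lra. }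
    assert (cI2 : cont_within D1 (fun t => / (Y2 t * Y2 t)) x).
    { apply cw_inv; [nra|]. apply cw_mult; auto. }
    unfold dd. apply cw_mult; auto. apply cw_mult; auto.
    apply cw_plus; [apply cw_scal; auto|].
    apply cw_mult; auto. apply cw_mult; [apply cw_scal; auto|auto]. }
  exists eps. split; auto. split.
  - exists (fun t => F1 k (Y1 t) (Y2 t) t), (fun t => (INR k - 1) * dd t).
    intros x Hx. fold D1 in Hx. fold D1. split; [|split].
    + eapply dw_sub; [apply HD1|apply (proj1 (Hd x (HD1 x Hx)))].
    + eapply dw_ext with (f := fun t => -1 + (INR k - 1) * psi (lamc t)); auto.
      * intros t Ht. symmetry. apply HF. auto.
      * eapply dw_val; [|apply dw_plus; [apply dw_const|apply dw_scal, Hdpsi; auto]]. ring.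
    + apply cw_scal. auto.
  - exists (fun t => F2 k (Y1 t) (Y2 t) t), (fun t => - (INR k - 1) * dd t).
    intros x Hx. fold D1 in Hx. fold D1. split; [|split].
    + eapply dw_sub; [apply HD1|apply (proj2 (Hd x (HD1 x Hx)))].
    + eapply dw_ext with (f := fun t => - (INR k - 1) * psi (lamc t)); auto.
      * intros t Ht. rewrite (proj2 (HF t Ht)). ring.
      * apply dw_scal, Hdpsi; auto.
    + apply cw_scal. auto.
Qed.

Theorem proposition3p3 (k : nat) (y1 y2 : R -> R -> R) :
  (3 <= k)%nat ->
  is_y_solution k y1 y2 ->
  (* (a) *)
  (forall rho, rho_max k < rho -> theta_star k rho = 1) /\
  (forall rho, 0 < rho -> rho <= rho_max k ->
     exists lam,
       (0 < lam /\ gk k lam = rho /\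
        (forall mu, 0 < mu -> gk k mu = rho -> mu <= lam)) /\
       theta_star k rho = 1 - (1 - exp (- lam)) ^ k /\
       y2 (theta_star k rho) rho = INR k / f1 lam * (1 - theta_star k rho)) /\
  (* (b) *)
  (let thk := theta_star k (rho_k k) in
   (* (I) *)
   (y2 thk (rho_k k) = 1 - thk /\ 0 < 1 - thk) /\
   (* (II) *)
   (exists d1 d2,
      deriv_within (fun t => 0 <= t < 1) (fun t => y1 t (rho_k k)) d1 thk /\
      deriv_within (fun t => 0 <= t < 1) (fun t => y2 t (rho_k k)) d2 thk /\
      d1 < 0 /\ d2 < 0) /\
   (* (III) *)
   (exists eps, 0 < eps /\
      C2_on 0 thk (fun t => y1 t (rho_k k)) /\
      C2_on 0 thk (fun t => y2 t (rho_k k)) /\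
      C2_on thk (thk + eps) (fun t => y1 t (rho_k k)) /\
      C2_on thk (thk + eps) (fun t => y2 t (rho_k k)))).
Proof.
  intros Hk Hsol. pose proof (INR_k_pos k Hk) as HK.
  split; [intros rho Hr; apply theta_star_big; auto|].
  split.
  - intros rho Hr Hrm. destruct (max_sol k rho Hk Hr Hrm) as [L [HL [HgL Hmax]]].
    destruct (main_a k y1 y2 rho L Hk Hsol Hr HL HgL Hmax) as [Hts [Hts01 [E1 [E2 _]]]].
    exists L. split; [split; [auto|split; [auto|]]|].
    + intros m Hm Hgm. apply Hmax; auto. lra.
    + rewrite Hts. split; auto.
  - destruct (rho_k_facts k Hk) as [Hr [Hrm Huniq]].
    destruct (max_sol k _ Hk Hr Hrm) as [L [HL [HgL Hmax]]].
    assert (HLk : L = lambda_k k) by (apply Huniq; auto).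
    destruct (main_a k y1 y2 _ L Hk Hsol Hr HL HgL Hmax) as [Hts [Hts01 [E1 [E2 Hid]]]].
    destruct (lambda_k_spec k Hk) as [Hl Hf].
    set (ts := 1 - (1 - exp (- L)) ^ k) in *.
    intro thk. unfold thk. rewrite Hts.
    assert (E2' : y2 ts (rho_k k) = 1 - ts).
    { rewrite E2, HLk, Hf. field. lra. }
    destruct (Hsol (rho_k k) Hr) as [_ [_ Hd]].
    assert (Hd' : forall t, 0 <= t < 1 ->
      deriv_within D0 (fun t => y1 t (rho_k k)) (F1 k (y1 t (rho_k k)) (y2 t (rho_k k)) t) t /\
      deriv_within D0 (fun t => y2 t (rho_k k)) (F2 k (y1 t (rho_k k)) (y2 t (rho_k k)) t) t).
    { intros t Ht. destruct (Hd t Ht) as [_ [A B]]. split; auto. }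
    assert (HFv : F1 k (y1 ts (rho_k k)) (y2 ts (rho_k k)) ts < 0 /\
                  F2 k (y1 ts (rho_k k)) (y2 ts (rho_k k)) ts < 0).
    { rewrite E1, E2'.
      destruct (F_after k 0 (1 - ts) ts Hk ltac:(lra) ltac:(lra) ltac:(lra) ltac:(nra)) as [F1e F2e].
      rewrite F1e, F2e.
      replace (INR k * (1 - ts) * / (1 - ts)) with (INR k) by (field; lra).
      rewrite lam_of_k by auto.
      pose proof (lambda_k_big k Hk). pose proof (expm1_pos _ Hl). unfold psi.
      assert (0 < lambda_k k / (exp (lambda_k k) - 1)) by (apply Rdiv_lt_0_compat; lra).
      assert ((INR k - 1) * (lambda_k k / (exp (lambda_k k) - 1)) < 1).
      { replace ((INR k - 1) * (lambda_k k / (exp (lambda_k k) - 1))) with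
          ((INR k - 1) * lambda_k k / (exp (lambda_k k) - 1)) by (field; lra).
        apply Rlt_div_l; lra. }
      split; nra. }
    split; [split; [auto|lra]|]. split.
    + exists (F1 k (y1 ts (rho_k k)) (y2 ts (rho_k k)) ts), (F2 k (y1 ts (rho_k k)) (y2 ts (rho_k k)) ts).
      destruct (Hd ts ltac:(lra)) as [_ [A B]]. split; [auto|split; [auto|]]. auto.
    + destruct (C2_after k (fun t => y1 t (rho_k k)) (fun t => y2 t (rho_k k)) ts Hk Hts01 E1 E2' Hd' (proj1 HFv))
        as [eps [Heps [C1 C2]]].
      exists eps. split; auto. split; [|split; [|split; auto]].
      * apply (C2_from_Z _ (Z1 k (rho_k k))); [lra|apply Z1_C2|]. intros t Ht. apply Hid. lra.
      * apply (C2_from_Z _ (Z2 k (rho_k k))); [lra|apply Z2_C2|]. intros t Ht. apply Hid. lra.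
Qed.
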